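(* Let $\Gamma\subset(0,\infty)$ be unbounded above, and for $\gamma\in\Gamma$ let $p_\gamma\in[1,2]$, $\mu_\gamma>0$, and let $\lambda_\gamma>0$ be defined by $\lambda_\gamma p_\gamma^2\gamma^{2(p_\gamma-1)}\mu_\gamma^2e^{\gamma^{p_\gamma}}=8$. Let $t_\gamma(x)=\ln(1+|x|^2/\mu_\gamma^2)$ on $\mathbb R^2$. Fix $\eta\in(0,1)$ and $h_0>0$. Let $\bar r_\gamma>0$ satisfy $\mu_\gamma/\bar r_\gamma\to0$ as $\gamma\to\infty$, $t_\gamma(\bar r_\gamma)\le\eta p_\gamma\gamma^{p_\gamma}/2$ for all large $\gamma$, and $\gamma^{2p_\gamma}\bar r_\gamma^2=O(1)$. Let $B_\gamma$ be radially symmetric, positive in $B_{\bar r_\gamma}(0)\subset\mathbb R^2$, with $B_\gamma(0)=\gamma$ and $$\Delta B_\gamma+h_0B_\gamma=\lambda_\gamma p_\gamma B_\gamma^{p_\gamma-1}e^{B_\gamma^{p_\gamma}}\quad\text{in }B_{\bar r_\gamma}(0),$$ and define $w_\gamma$ by $B_\gamma=\gamma\left(1-\frac{2t_\gamma}{p_\gamma\gamma^{p_\gamma}}+\frac{w_\gamma}{\gamma^{p_\gamma}}\right)$. Then, for every fixed $\tilde\eta\in(\eta,1)$, there exist $C>0$ and $\gamma_0$ such that for all $\gamma\in\Gamma$, $\gamma\ge\gamma_0$ and all $r\in[0,\bar r_\gamma]$ (writing radial functions as functions of $r=|x|$): $B_\gamma(r)\le\gamma$, $|w_\gamma(r)|\le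 C\gamma^{-p_\gamma}t_\gamma(r)$, $|w_\gamma'(r)|\le C\gamma^{-p_\gamma}t_\gamma'(r)$, and $$\lambda_\gamma p_\gamma B_\gamma^{p_\gamma-1}e^{B_\gamma^{p_\gamma}}(r)=\frac{8e^{-2t_\gamma(r)}}{\mu_\gamma^2\gamma^{p_\gamma-1}p_\gamma}\left(1+E_\gamma(r)\right),\quad |E_\gamma(r)|\le C\frac{e^{\tilde\eta t_\gamma(r)}}{\gamma^{p_\gamma}}.$$
   Context: $\Delta=-\partial_{xx}-\partial_{yy}$ is the (nonnegative) Euclidean Laplacian on $\mathbb R^2$. *)

(* Defs.v *)
From Stdlib Require Import Reals.
From Coquelicot Require Import Coquelicot.
Open Scope R_scope.

Definition lam (p mu g : R) : R :=
  8 / (p ^ 2 * Rpower g (2 * (p - 1)) * mu ^ 2 * exp (Rpower g p)).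

Definition tfun (mu r : R) : R := ln (1 + r ^ 2 / mu ^ 2).

(* w_gamma defined by B = gamma (1 - 2 t/(p gamma^p) + w/gamma^p) *)
Definition wfun (g p mu : R) (b : R -> R) (r : R) : R :=
  Rpower g p * (b r / g - 1 + 2 * tfun mu r / (p * Rpower g p)).

Definition nonlin (l p b : R) : R := l * p * Rpower b (p - 1) * exp (Rpower b p).

(* Main.v *)
Require Import Defs.
From Stdlib Require Import Reals Lra Psatz Classical.
From Coquelicot Require Import Coquelicot.
Open Scope R_scope.


Lemma is_derive_cont f x l : is_derive f x l -> continuity_pt f x.
Proof.
  intros H. apply continuity_pt_filterlim. apply (ex_derive_continuous (V:=R_NormedModule)). exists l; exact H.
Qed.

Lemma mono_lem (h dh : R -> R) (a b : R) : a <= b ->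
  (forall x, a < x < b -> is_derive h x (dh x)) ->
  (forall x, a <= x <= b -> continuity_pt h x) ->
  (forall x, a < x < b -> 0 <= dh x) -> h a <= h b.
Proof.
  intros Hab Hd Hc Hp.
  destruct (Req_dec a b) as [<-|Hne]; [lra|].
  assert (Hlt : a < b) by lra.
  assert (pr1 : forall c, a < c < b -> derivable_pt h c).
  { intros c Hc'. exists (dh c). apply is_derive_Reals. apply Hd; auto. }
  assert (pr2 : forall c, a < c < b -> derivable_pt id c).
  { intros c _. apply derivable_pt_id. }
  destruct (MVT h id a b pr1 pr2 Hlt Hc) as [c [P E]].
  { intros c _. apply derivable_continuous_pt, derivable_pt_id. }
  assert (E1 : derive_pt h c (pr1 c P) = dh c).
  { apply derive_pt_eq_0. apply is_derive_Reals. apply Hd; auto. }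
  assert (E2 : derive_pt id c (pr2 c P) = 1).
  { apply derive_pt_eq_0. apply derivable_pt_lim_id. }
  rewrite E1, E2 in E. unfold id in E. specialize (Hp c P). nra.
Qed.

Lemma cmp (f df H dH : R -> R) (a b : R) : a <= b ->
  (forall x, a < x < b -> is_derive f x (df x)) ->
  (forall x, a < x < b -> is_derive H x (dH x)) ->
  (forall x, a <= x <= b -> continuity_pt f x) ->
  (forall x, a <= x <= b -> continuity_pt H x) ->
  (forall x, a < x < b -> Rabs (df x) <= dH x) ->
  Rabs (f b - f a) <= H b - H a.
Proof.
  intros Hab Hf HH Cf CH Hd.
  assert (A1 := mono_lem (fun x => H x - f x) (fun x => dH x - df x) a b Hab).
  assert (A2 := mono_lem (fun x => H x + f x) (fun x => dH x + df x) a b Hab).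
  simpl in A1, A2.
  assert (H1 : H a - f a <= H b - f b).
  { apply A1.
    - intros x Hx. apply (is_derive_minus H f); auto.
    - intros x Hx. apply continuity_pt_minus; auto.
    - intros x Hx. specialize (Hd x Hx). apply Rabs_le_between in Hd. lra. }
  assert (H2 : H a + f a <= H b + f b).
  { apply A2.
    - intros x Hx. apply (is_derive_plus H f); auto.
    - intros x Hx. apply continuity_pt_plus; auto.
    - intros x Hx. specialize (Hd x Hx). apply Rabs_le_between in Hd. lra. }
  apply Rabs_le; lra.
Qed.

Definition qf mu s := mu^2/(mu^2+s^2).
Definition rho mu s := 8*qf mu s^2/mu^2.
Definition phi0 mu s := 2*qf mu s - 1.
Definition dphi0 mu s := -4*s*qf mu s^2/mu^2.
Definition ddphi0 mu s := -4*qf mu s^2/mu^2 + 16*s^2*qf mu s^3/mu^4.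
Definition phi1 mu s := phi0 mu s * ln (s/mu) + 1.
Definition dphi1 mu s := dphi0 mu s * ln (s/mu) + phi0 mu s / s.
Definition ddphi1 mu s := ddphi0 mu s * ln (s/mu) + 2*dphi0 mu s/s - phi0 mu s/s^2.
Definition dt mu s := 2*s*qf mu s/mu^2.

Lemma den_pos mu s : 0 < mu -> 0 < mu^2+s^2.
Proof. intros; nra. Qed.

Lemma qf_pos mu s : 0 < mu -> 0 < qf mu s.
Proof. intros H; unfold qf; apply Rdiv_lt_0_compat; nra. Qed.

Lemma qf_le1 mu s : 0 < mu -> qf mu s <= 1.
Proof. intros H; unfold qf. apply Rmult_le_reg_r with (mu^2+s^2). nra.
  field_simplify; nra. Qed.

Lemma qf_sq mu s : 0 < mu -> s^2 * qf mu s = mu^2 * (1 - qf mu s).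
Proof. intros H; unfold qf. field. nra. Qed.

Lemma d_qf mu s : 0 < mu -> is_derive (qf mu) s (-2*s*qf mu s^2/mu^2).
Proof. intros H. unfold qf. auto_derive. nra. field. nra. Qed.

Lemma d_phi0 mu s : 0 < mu -> is_derive (phi0 mu) s (dphi0 mu s).
Proof. intros H. unfold phi0, dphi0, qf. auto_derive. nra. field. nra. Qed.

Lemma d_dphi0 mu s : 0 < mu -> is_derive (dphi0 mu) s (ddphi0 mu s).
Proof. intros H. unfold ddphi0, dphi0, qf. auto_derive. nra. field. nra. Qed.

Lemma d_phi1 mu s : 0 < mu -> 0 < s -> is_derive (phi1 mu) s (dphi1 mu s).
Proof. intros H Hs. unfold phi1, dphi1, phi0, dphi0, qf. auto_derive.
  split. nra. split. apply Rdiv_lt_0_compat; lra. auto. change (s * / mu) with (s / mu). field; repeat split; nra. Qed.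

Lemma d_dphi1 mu s : 0 < mu -> 0 < s -> is_derive (dphi1 mu) s (ddphi1 mu s).
Proof. intros H Hs. unfold ddphi1, dphi1, ddphi0, phi0, dphi0, qf. auto_derive.
  repeat split; try nra. apply Rdiv_lt_0_compat; lra. change (s * / mu) with (s / mu). field; repeat split; nra. Qed.

Lemma d_t mu s : 0 < mu -> is_derive (tfun mu) s (dt mu s).
Proof. intros H. unfold tfun, dt, qf. auto_derive. 
  assert (0 <= s^2/mu^2) by (apply Rdiv_le_0_compat; nra). change (s * (s * 1) * / (mu * (mu * 1))) with (s^2/mu^2) ; lra. field; repeat split; nra. Qed.

Lemma exp_mt mu s : 0 < mu -> exp (- tfun mu s) = qf mu s.
Proof. intros H. unfold tfun, qf. rewrite exp_Ropp, exp_ln.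
  field. split; nra. assert (0 <= s^2/mu^2) by (apply Rdiv_le_0_compat; nra). lra. Qed.

Lemma t_nonneg mu s : 0 < mu -> 0 <= tfun mu s.
Proof. intros H. unfold tfun. rewrite <- ln_1. apply ln_le. lra.
  assert (0 <= s^2/mu^2) by (apply Rdiv_le_0_compat; nra). lra. Qed.

Lemma ode0 mu s : 0 < mu -> dphi0 mu s + s * ddphi0 mu s + s * rho mu s * phi0 mu s = 0.
Proof. intros H. unfold dphi0, ddphi0, rho, phi0, qf. field. nra. Qed.

Lemma ode1 mu s : 0 < mu -> 0 < s -> dphi1 mu s + s * ddphi1 mu s + s * rho mu s * phi1 mu s = 0.
Proof. intros H Hs. unfold dphi1, ddphi1, phi1.
  replace (dphi0 mu s * ln (s / mu) + phi0 mu s / s + s * (ddphi0 mu s * ln (s / mu) + 2 * dphi0 mu s / s - phi0 mu s / s ^ 2) + s * rho mu s * (phi0 mu s * ln (s / mu) + 1))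
   with (ln (s/mu) * (dphi0 mu s + s * ddphi0 mu s + s * rho mu s * phi0 mu s) + (2*dphi0 mu s + s * rho mu s)) by (field; lra).
  rewrite ode0 by auto. unfold dphi0, rho. field. lra. Qed.

Lemma wronsk mu s : 0 < mu -> 0 < s -> s * (phi0 mu s * dphi1 mu s - phi1 mu s * dphi0 mu s) = 1.
Proof. intros H Hs. unfold dphi1, phi1, phi0, dphi0, qf. field. split; nra. Qed.

Lemma d_mult f g x df dg : is_derive f x df -> is_derive g x dg ->
  is_derive (fun y => f y * g y) x (df * g x + f x * dg).
Proof. intros H1 H2. apply (is_derive_mult f g); auto. intros; apply Rmult_comm. Qed.

Lemma d_minus f g x df dg : is_derive f x df -> is_derive g x dg ->
  is_derive (fun y => f y - g y) x (df - dg).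
Proof. intros H1 H2. apply (is_derive_minus f g); auto. Qed.

Lemma d_id x : is_derive (fun y : R => y) x 1.
Proof. apply (is_derive_id x). Qed.

Lemma d_val (f : R -> R) x l l' : is_derive f x l -> l = l' -> is_derive f x l'.
Proof. intros H <-; exact H. Qed.

Lemma wr_deriv (P dP ddP w wd F rh : R -> R) s wdd :
  is_derive P s (dP s) -> is_derive dP s (ddP s) -> is_derive w s (wd s) ->
  is_derive wd s wdd -> wdd + wd s / s = F s - rh s * w s ->
  dP s + s * ddP s + s * rh s * P s = 0 -> s <> 0 ->
  is_derive (fun y => y * (P y * wd y - w y * dP y)) s (s * P s * F s).
Proof.
  intros HP HdP Hw Hwd Hode Hphi Hs.
  eapply d_val.
  { apply d_mult. apply d_id. apply d_minus; apply d_mult; eauto. }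
  match goal with |- ?x = ?y => change (@eq R x y) end.
  assert (wdd = F s - rh s * w s - wd s / s) by lra. subst wdd.
  replace (dP s) with (- s * ddP s - s * rh s * P s) by lra.
  field. auto.
Qed.

Lemma ln2_lt1 : ln 2 < 1.
Proof. rewrite <- ln_exp with 1. apply ln_increasing. lra.
  assert (H := exp_ineq1 1). lra. Qed.

Lemma ln2_pos : 0 < ln 2.
Proof. assert (H := ln_lt_2). lra. Qed.

Lemma ln1p_le x : 0 <= x -> ln (1+x) <= x.
Proof. intros H. assert (H1 := exp_ineq1_le x). rewrite <- (ln_exp x) at 2.
  apply ln_le; lra. Qed.

Lemma ln_le_m1 x : 0 < x -> ln x <= x - 1.
Proof. intros H. assert (H1 := exp_ineq1_le (x-1)). rewrite <- (ln_exp (x-1)).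
  apply ln_le; lra. Qed.

Lemma ln1p_ge x : 0 <= x -> x/(1+x) <= ln (1+x).
Proof. intros H. assert (H1 := ln_le_m1 (/(1+x)) ltac:(apply Rinv_0_lt_compat; lra)).
  rewrite ln_Rinv in H1 by lra. apply Rmult_le_reg_r with (1+x). lra.
  assert (/(1+x) * (1+x) = 1) by (field; lra).
  unfold Rdiv. rewrite Rmult_assoc, Rinv_l by lra. nra. Qed.

Lemma sq_div_nonneg mu s : 0 < mu -> 0 <= s^2/mu^2.
Proof. intros; apply Rdiv_le_0_compat; nra. Qed.

Lemma t_le mu s : 0 < mu -> tfun mu s <= s^2/mu^2.
Proof. intros H. apply ln1p_le, sq_div_nonneg; auto. Qed.

Lemma t_ge mu s : 0 < mu -> (s^2/mu^2)/(1+s^2/mu^2) <= tfun mu s.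
Proof. intros H. apply ln1p_ge, sq_div_nonneg; auto. Qed.

Lemma t_mono mu s r : 0 < mu -> 0 <= s <= r -> tfun mu s <= tfun mu r.
Proof. intros H Hs. unfold tfun. apply ln_le.
  assert (0 <= s^2/mu^2) by (apply sq_div_nonneg; auto). lra.
  apply Rplus_le_compat_l. unfold Rdiv. apply Rmult_le_compat_r.
  apply Rlt_le, Rinv_0_lt_compat; nra. nra. Qed.

Lemma t_eq_lnq mu s : 0 < mu -> tfun mu s = - ln (qf mu s).
Proof. intros H. rewrite <- exp_mt by auto. rewrite ln_exp. ring. Qed.

Lemma qt_le mu s : 0 < mu -> qf mu s * tfun mu s <= 1 - qf mu s.
Proof. intros H. rewrite t_eq_lnq by auto.
  assert (Hq := qf_pos mu s H). assert (Hq1 := qf_le1 mu s H).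
  assert (H1 := ln_le_m1 (/ qf mu s) ltac:(apply Rinv_0_lt_compat; lra)).
  rewrite ln_Rinv in H1 by lra.
  assert (qf mu s * (- ln (qf mu s)) <= qf mu s * (/ qf mu s - 1)) by (apply Rmult_le_compat_l; lra).
  assert (qf mu s * / qf mu s = 1) by (field; lra). nra. Qed.

Lemma q_ge45 mu s : 0 < mu -> s^2 <= mu^2/4 -> 4/5 <= qf mu s.
Proof. intros H Hs. unfold qf. apply Rmult_le_reg_r with (mu^2+s^2). nra.
  field_simplify; nra. Qed.

Lemma q_le45 mu s : 0 < mu -> mu^2/4 <= s^2 -> qf mu s <= 4/5.
Proof. intros H Hs. unfold qf. apply Rmult_le_reg_r with (mu^2+s^2). nra.
  field_simplify; nra. Qed.

Lemma exp_t_mul mu s c : 0 < mu -> exp ((c-1) * tfun mu s) = exp (c * tfun mu s) * qf mu s.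
Proof. intros H. rewrite <- exp_mt by auto. rewrite <- exp_plus. f_equal. ring. Qed.

Lemma d_expt mu c s : 0 < mu ->
  is_derive (fun y => exp (c * tfun mu y)) s (c * dt mu s * exp (c * tfun mu s)).
Proof. intros H.
  apply d_val with (scal (c * dt mu s) (exp (c * tfun mu s))).
  apply (is_derive_comp exp (fun y => c * tfun mu y)).
  apply is_derive_Reals, derivable_pt_lim_exp.
  apply is_derive_scal, d_t; auto. reflexivity. Qed.

Lemma lin_ex_bound (e t : R) : 0 < e -> 0 <= t -> 2 + t/2 <= (2 + 1/(2*e)) * exp (e * t).
Proof. intros He Ht. assert (H := exp_ineq1_le (e*t)).
  apply Rle_trans with ((2 + 1/(2*e)) * (1 + e*t)).
  assert (1/(2*e) * (e*t) = t/2) by (field; lra).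
  assert (0 <= 1/(2*e)) by (apply Rlt_le, Rdiv_lt_0_compat; lra). nra.
  apply Rmult_le_compat_l. assert (0 <= 1/(2*e)) by (apply Rlt_le, Rdiv_lt_0_compat; lra). lra. lra. Qed.

Lemma exp_le_mono x y : x <= y -> exp x <= exp y.
Proof. intros [H|H]. apply Rlt_le, exp_increasing; auto. subst; lra. Qed.

Definition LinHyp mu r1 e a b (w wd F : R -> R) : Prop :=
  0 < mu /\ 0 <= r1 /\ 0 < e < 1 /\ 0 <= a /\ 0 <= b /\
  (forall s, 0 <= s <= r1 -> is_derive w s (wd s)) /\
  (forall s, 0 <= s <= r1 -> ex_derive wd s) /\
  (forall s, 0 < s < r1 -> Derive wd s + wd s / s = F s - rho mu s * w s) /\
  w 0 = 0 /\ wd 0 = 0 /\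
  (forall s, 0 < s < r1 -> Rabs (F s) <= a + b * rho mu s * exp (e * tfun mu s)).

Lemma wr_cont (P dP w wd : R -> R) s dp ddp a1 a2 :
  is_derive P s dp -> is_derive dP s ddp -> is_derive w s a1 -> is_derive wd s a2 ->
  continuity_pt (fun y => y*(P y*wd y - w y*dP y)) s.
Proof. intros. eapply is_derive_cont. apply d_mult. apply d_id. apply d_minus; apply d_mult; eauto. Qed.

Lemma phi0_abs mu s : 0 < mu -> Rabs (phi0 mu s) <= 1.
Proof. intros H. unfold phi0. assert (H1 := qf_pos mu s H). assert (H2 := qf_le1 mu s H).
  apply Rabs_le; lra. Qed.

Lemma d_asq (a s : R) : is_derive (fun y => a*y^2/2) s (a*s).
Proof. auto_derive; auto. field. Qed.

Lemma W0b mu r1 e a b w wd F : LinHyp mu r1 e a b w wd F ->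
  forall r, 0 <= r <= r1 ->
  Rabs (r*(phi0 mu r * wd r - w r * dphi0 mu r)) <= a*r^2/2 + 4*b/(1-e)*(1 - exp((e-1)*tfun mu r)).
Proof.
  intros (Hmu & Hr1 & He & Ha & Hb & Hw & Hwd & Hode & Hw0 & Hwd0 & HF) r Hr.
  set (W := fun y => y*(phi0 mu y * wd y - w y * dphi0 mu y)).
  set (Hf := fun y => a*y^2/2 - 4*b/(1-e)*exp((e-1)*tfun mu y)).
  assert (HW0 : W 0 = 0) by (unfold W; ring).
  assert (Ht0 : tfun mu 0 = 0).
  { unfold tfun. replace (1 + 0^2/mu^2) with 1 by (field; lra). apply ln_1. }
  assert (Hf0 : Hf 0 = - 4*b/(1-e)).
  { unfold Hf. rewrite Ht0, Rmult_0_r, exp_0. field. lra. }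
  replace (a*r^2/2 + 4*b/(1-e)*(1 - exp((e-1)*tfun mu r))) with (Hf r - Hf 0)
    by (rewrite Hf0; unfold Hf; field; lra).
  replace (r*(phi0 mu r * wd r - w r * dphi0 mu r)) with (W r - W 0) by (rewrite HW0; unfold W; ring).
  apply cmp with (df := fun s => s * phi0 mu s * F s)
                 (dH := fun s => a * s + 4*b*dt mu s * exp((e-1)*tfun mu s)).
  - lra.
  - intros s Hs. unfold W. apply wr_deriv with (ddP := ddphi0 mu) (rh := rho mu) (wdd := Derive wd s).
    apply d_phi0; auto. apply d_dphi0; auto. apply Hw; lra. apply Derive_correct, Hwd; lra.
    apply Hode; lra. apply ode0; auto. lra.
  - intros s Hs. unfold Hf. eapply d_val.
    apply d_minus. apply d_asq.
    apply is_derive_scal with (k := 4*b/(1-e)). apply d_expt; auto.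
    simpl. field. lra.
  - intros s Hs. unfold W. eapply wr_cont. apply d_phi0; auto. apply d_dphi0; auto.
    apply Hw; lra. apply Derive_correct, Hwd; lra.
  - intros s Hs. unfold Hf. eapply is_derive_cont. eapply d_minus.
    apply d_asq.
    apply is_derive_scal with (k := 4*b/(1-e)). apply d_expt; auto.
  - intros s Hs. specialize (HF s ltac:(lra)).
    rewrite exp_t_mul by auto.
    assert (Hq := qf_pos mu s Hmu). assert (Hex := exp_pos (e * tfun mu s)).
    rewrite !Rabs_mult. rewrite (Rabs_right s) by lra.
    assert (Hp := phi0_abs mu s Hmu).
    assert (HFp : 0 <= Rabs (F s)) by apply Rabs_pos.
    apply Rle_trans with (s * 1 * (a + b * rho mu s * exp (e * tfun mu s))).
    assert (0 <= Rabs (phi0 mu s)) by apply Rabs_pos.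
    apply Rmult_le_compat. nra. auto. apply Rmult_le_compat_l; lra. auto.
    unfold rho, dt. right. field. lra.
Qed.

Lemma W0b1 mu r1 e a b w wd F : LinHyp mu r1 e a b w wd F ->
  forall r, 0 <= r <= r1 ->
  Rabs (r*(phi0 mu r * wd r - w r * dphi0 mu r)) <= (a/2 + 4*b/mu^2)*r^2.
Proof.
  intros HL r Hr. assert (H := W0b _ _ _ _ _ _ _ _ HL r Hr).
  destruct HL as (Hmu & Hr1 & He & Ha & Hb & _).
  assert (H1 := exp_ineq1_le ((e-1)*tfun mu r)).
  assert (H2 := t_le mu r Hmu). assert (H3 := t_nonneg mu r Hmu).
  assert (H4 : 4*b/(1-e)*(1 - exp((e-1)*tfun mu r)) <= 4*b/(1-e) * ((1-e) * (r^2/mu^2))).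
  { apply Rmult_le_compat_l. apply Rdiv_le_0_compat; lra. nra. }
  replace (4*b/(1-e) * ((1-e) * (r^2/mu^2))) with (4*b/mu^2*r^2) in H4 by (field; lra).
  lra.
Qed.

Lemma W0b2 mu r1 e a b w wd F : LinHyp mu r1 e a b w wd F ->
  forall r, 0 <= r <= r1 ->
  Rabs (r*(phi0 mu r * wd r - w r * dphi0 mu r)) <= a*r^2/2 + 4*b/(1-e).
Proof.
  intros HL r Hr. assert (H := W0b _ _ _ _ _ _ _ _ HL r Hr).
  destruct HL as (Hmu & Hr1 & He & Ha & Hb & _).
  assert (H1 := exp_pos ((e-1)*tfun mu r)).
  assert (4*b/(1-e)*(1 - exp((e-1)*tfun mu r)) <= 4*b/(1-e)).
  { assert (0 <= 4*b/(1-e)) by (apply Rdiv_le_0_compat; lra). nra. }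
  lra.
Qed.

Lemma phi0_ge mu s : 0 < mu -> s^2 <= mu^2/4 -> 3/5 <= phi0 mu s.
Proof. intros H Hs. assert (H1 := q_ge45 mu s H Hs). unfold phi0. lra. Qed.

Lemma regI mu r1 e a b w wd F : LinHyp mu r1 e a b w wd F ->
  forall r, 0 <= r <= r1 -> r^2 <= mu^2/4 ->
  Rabs (w r) <= 25/18*(a/2 + 4*b/mu^2)*r^2 /\
  (0 < r -> Rabs (wd r) <= 5/3*(43/18)*(a/2 + 4*b/mu^2)*r).
Proof.
  intros HL r Hr Hrm.
  assert (HW := W0b1 _ _ _ _ _ _ _ _ HL).
  destruct HL as (Hmu & Hr1 & He & Ha & Hb & Hw & Hwd & Hode & Hw0 & Hwd0 & HF).
  set (al := a/2 + 4*b/mu^2).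
  assert (Hal : 0 <= al). { unfold al. assert (0 <= 4*b/mu^2) by (apply Rdiv_le_0_compat; nra). lra. }
  assert (Hp : forall s, 0 <= s <= r -> 3/5 <= phi0 mu s).
  { intros s Hs. apply phi0_ge; auto. nra. }
  set (f := fun y => w y / phi0 mu y).
  assert (Hfd : forall s, 0 <= s <= r -> is_derive f s ((wd s * phi0 mu s - w s * dphi0 mu s)/phi0 mu s^2)).
  { intros s Hs. unfold f. apply is_derive_div. apply Hw; lra. apply d_phi0; auto.
    specialize (Hp s Hs). lra. }
  assert (Hwr : Rabs (w r) <= 25/18*al*r^2).
  { assert (Hc : Rabs (f r - f 0) <= 25/18*al*r^2 - 25/18*al*0^2).
    { apply cmp with (H := fun s => 25/18*al*s^2) (df := fun s => (wd s * phi0 mu s - w s * dphi0 mu s)/phi0 mu s^2)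
                     (dH := fun s => 25/9*al*s).
      - lra.
      - intros s Hs; apply Hfd; lra.
      - intros s Hs. eapply d_val. apply is_derive_scal with (k := 25/18*al) (f := fun y => y^2).
        auto_derive; auto. simpl. field.
      - intros s Hs. eapply is_derive_cont. apply Hfd; lra.
      - intros s Hs. apply continuity_pt_mult. apply continuity_pt_const. intros u v; auto.
        apply derivable_continuous_pt. apply derivable_pt_pow.
      - intros s Hs. specialize (HW s ltac:(lra)). specialize (Hp s ltac:(lra)).
        assert (E : (wd s * phi0 mu s - w s * dphi0 mu s) / phi0 mu s ^ 2
                    = s * (phi0 mu s * wd s - w s * dphi0 mu s) / (s * phi0 mu s ^2)) by (field; repeat split; lra).
        rewrite E. unfold Rdiv. rewrite Rabs_mult, Rabs_inv.
        rewrite (Rabs_right (s * phi0 mu s ^2)) by (apply Rle_ge, Rlt_le, Rmult_lt_0_compat; [lra | apply pow_lt; lra]).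
        apply Rle_trans with (al * s^2 * / (s * phi0 mu s ^ 2)).
        apply Rmult_le_compat_r. apply Rlt_le, Rinv_0_lt_compat. apply Rmult_lt_0_compat; [lra | apply pow_lt; lra]. exact HW.
        replace (al * s^2 * / (s * phi0 mu s ^ 2)) with (al * s * / (phi0 mu s ^2)) by (field; repeat split; lra).
        apply Rle_trans with (al * s * / ((3/5)^2)).
        apply Rmult_le_compat_l. nra. apply Rinv_le_contravar. nra. nra. lra. }
    assert (Hf0 : f 0 = 0) by (unfold f; rewrite Hw0; unfold Rdiv; ring).
    rewrite Hf0, Rminus_0_r in Hc. 
    assert (Hwf : w r = f r * phi0 mu r) by (unfold f; field; specialize (Hp r ltac:(lra)); lra).
    rewrite Hwf, Rabs_mult. assert (H1 := phi0_abs mu r Hmu). assert (H2 := Rabs_pos (f r)).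
    replace (25 / 18 * al * r ^ 2 - 25 / 18 * al * 0 ^ 2) with (25/18*al*r^2) in Hc by ring.
    nra. }
  split; auto. intros Hr0.
  specialize (HW r Hr). specialize (Hp r ltac:(lra)).
  assert (E : wd r = (r * (phi0 mu r * wd r - w r * dphi0 mu r) / r + w r * dphi0 mu r) / phi0 mu r)
    by (field; lra).
  rewrite E. 
  set (W := r * (phi0 mu r * wd r - w r * dphi0 mu r)) in *.
  assert (Hd : Rabs (dphi0 mu r) <= 4*r/mu^2).
  { unfold dphi0. assert (Hq := qf_pos mu r Hmu). assert (Hq1 := qf_le1 mu r Hmu).
    rewrite Rabs_left1. 2:{ unfold Rdiv. assert (0 < /mu^2) by (apply Rinv_0_lt_compat; nra). 
      clear -Hq Hq1 H Hr0 Hmu. assert (0 < qf mu r ^2) by nra. assert (0 <= r * qf mu r ^2) by nra. nra. }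
    unfold Rdiv. assert (0 < /mu^2) by (apply Rinv_0_lt_compat; nra). 
    assert (qf mu r ^2 <= 1) by nra. assert (0 <= r * / mu^2) by (apply Rmult_le_pos; lra). clear -Hq Hq1 H H0 Hr0 H1. nra. }
  unfold Rdiv at 1. rewrite Rabs_mult, Rabs_inv, (Rabs_right (phi0 mu r)) by lra.
  assert (Hnum : Rabs (W / r + w r * dphi0 mu r) <= 43/18*al*r).
  { eapply Rle_trans. apply Rabs_triang. rewrite Rabs_mult. unfold Rdiv. rewrite Rabs_mult, Rabs_inv, (Rabs_right r) by lra.
    assert (HW' : Rabs W * / r <= al * r).
    { apply Rle_trans with (al * r^2 * / r). apply Rmult_le_compat_r. apply Rlt_le, Rinv_0_lt_compat; lra. auto.
      right. field. lra. }
    assert (Hr2 : r^2/mu^2 <= 1/4). { apply Rmult_le_reg_r with (mu^2). nra. field_simplify; nra. }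
    assert (Hx : Rabs (w r) * Rabs (dphi0 mu r) <= 25/18*al*r^2 * (4*r/mu^2)).
    { apply Rmult_le_compat; try apply Rabs_pos; auto. }
    assert (25/18*al*r^2 * (4*r/mu^2) <= 25/18*al*r) .
    { replace (25/18*al*r^2 * (4*r/mu^2)) with (25/18*al*r * (4*(r^2/mu^2))) by (field; lra).
      assert (0 <= 25/18*al*r) by nra. nra. }
    lra. }
  apply Rle_trans with (43/18*al*r * / phi0 mu r).
  apply Rmult_le_compat_r. apply Rlt_le, Rinv_0_lt_compat; lra. auto.
  apply Rle_trans with (43/18*al*r * / (3/5)).
  apply Rmult_le_compat_l. nra. apply Rinv_le_contravar; lra. right. field.
Qed.

Definition K0 e := 1/2 + 4/(1-e).
Definition K2 e := 2 + 1/(1-e).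
Definition K5 e := 15 + 8*K2 e/(1-e).
Definition KL e := 20*(K0 e + K5 e + 1).

Lemma ln_ratio_bound mu s : 0 < mu -> mu/2 <= s -> Rabs (ln (s/mu)) <= 1 + tfun mu s / 2.
Proof.
  intros Hmu Hs. assert (Ht := t_nonneg mu s Hmu).
  assert (Hsm : 0 < s/mu) by (apply Rdiv_lt_0_compat; lra).
  destruct (Rle_lt_dec mu s) as [H1|H1].
  - assert (H2 : 1 <= s/mu) by (apply Rmult_le_reg_r with mu; [lra|]; field_simplify; lra).
    assert (H3 : 0 <= ln (s/mu)) by (rewrite <- ln_1; apply ln_le; lra).
    rewrite Rabs_right by lra.
    assert (H4 : 2 * ln (s/mu) <= tfun mu s).
    { unfold tfun. replace (2 * ln (s/mu)) with (ln ((s/mu) * (s/mu))) by (rewrite ln_mult; lra).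
      apply ln_le. nra. replace (s^2/mu^2) with ((s/mu)*(s/mu)) by (field; lra). lra. }
    lra.
  - assert (H2 : s/mu < 1) by (apply Rmult_lt_reg_r with mu; [lra|]; field_simplify; lra).
    assert (H2' : 1/2 <= s/mu) by (apply Rmult_le_reg_r with mu; [lra|]; field_simplify; lra).
    assert (H3 : ln (s/mu) <= 0) by (rewrite <- ln_1; apply ln_le; lra).
    assert (H4 : ln (1/2) <= ln (s/mu)) by (apply ln_le; lra).
    rewrite ln_div in H4 by lra. rewrite ln_1 in H4.
    assert (H5 := ln2_lt1).
    rewrite Rabs_left1 by lra. lra.
Qed.

Lemma phi1_abs mu s : 0 < mu -> mu/2 <= s -> Rabs (phi1 mu s) <= 2 + tfun mu s / 2.
Proof.
  intros Hmu Hs. unfold phi1. eapply Rle_trans. apply Rabs_triang.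
  rewrite Rabs_mult, Rabs_R1. assert (H1 := phi0_abs mu s Hmu).
  assert (H2 := ln_ratio_bound mu s Hmu Hs). assert (H3 := Rabs_pos (ln (s/mu))).
  assert (H4 := Rabs_pos (phi0 mu s)).
  assert (Rabs (phi0 mu s) * Rabs (ln (s / mu)) <= 1 * (1 + tfun mu s / 2)) by
    (apply Rmult_le_compat; auto).
  lra.
Qed.

Lemma q1q mu s : 0 < mu -> 4 * (qf mu s * (1 - qf mu s)) <= 1.
Proof. intros H. assert (0 <= (2*qf mu s-1)^2) by (apply pow2_ge_0). nra. Qed.

Lemma sdphi0 mu s : 0 < mu -> s * dphi0 mu s = -4 * (qf mu s * (1 - qf mu s)).
Proof. intros H. unfold dphi0.
  assert (E: 1 - qf mu s = s^2 * qf mu s / mu^2) by (rewrite qf_sq by auto; field; lra).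
  rewrite E. field. lra. Qed.

Lemma sdt mu s : 0 < mu -> s * dt mu s = 2 * (1 - qf mu s).
Proof. intros H. unfold dt. replace (s * (2 * s * qf mu s / mu ^ 2)) with (2 * (s^2 * qf mu s) / mu^2) by (field; nra).
  rewrite qf_sq by auto. field. nra. Qed.

Lemma sdphi1_abs mu s : 0 < mu -> mu/2 <= s -> Rabs (s * dphi1 mu s) <= 4.
Proof.
  intros Hmu Hs. unfold dphi1.
  replace (s * (dphi0 mu s * ln (s / mu) + phi0 mu s / s)) with ((s * dphi0 mu s) * ln (s/mu) + phi0 mu s)
    by (field; lra).
  rewrite sdphi0 by auto.
  eapply Rle_trans. apply Rabs_triang. rewrite Rabs_mult.
  assert (H1 := phi0_abs mu s Hmu). assert (H2 := ln_ratio_bound mu s Hmu Hs).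
  assert (Hq := qf_pos mu s Hmu). assert (Hq1 := qf_le1 mu s Hmu).
  assert (Hqt := qt_le mu s Hmu). assert (Ht := t_nonneg mu s Hmu).
  assert (Hqq : 0 <= qf mu s * (1 - qf mu s)) by (apply Rmult_le_pos; lra).
  rewrite Rabs_left1 by lra.
  assert (H3 : - (-4 * (qf mu s * (1 - qf mu s))) * Rabs (ln (s / mu)) <= 4 * (qf mu s * (1 - qf mu s)) * (1 + tfun mu s / 2)).
  { 
    assert (0 <= 4 * (qf mu s * (1 - qf mu s))) by lra.
    apply Rle_trans with (4 * (qf mu s * (1 - qf mu s)) * Rabs (ln (s/mu))). right; ring.
    apply Rmult_le_compat_l; auto. }
  assert (H4 : qf mu s * (1 - qf mu s) * tfun mu s <= 1).
  { apply Rle_trans with (qf mu s * tfun mu s). 2: lra.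
    assert (0 <= qf mu s * tfun mu s) by (apply Rmult_le_pos; lra).
    replace (qf mu s * (1 - qf mu s) * tfun mu s) with ((qf mu s * tfun mu s) * (1 - qf mu s)) by ring.
    assert ((qf mu s * tfun mu s) * (1 - qf mu s) <= (qf mu s * tfun mu s) * 1) by (apply Rmult_le_compat_l; lra).
    lra. }
  assert (H5 := q1q mu s Hmu). lra.
Qed.

Lemma W1b mu r1 e a b w wd F r : LinHyp mu r1 e a b w wd F ->
  mu/2 <= r <= r1 ->
  Rabs (r*(phi1 mu r * wd r - w r * dphi1 mu r) - mu/2*(phi1 mu (mu/2) * wd (mu/2) - w (mu/2) * dphi1 mu (mu/2)))
   <= a*(2 + tfun mu r/2)*r^2/2 + 8*b*K2 e/(1-e).
Proof.
  intros HL Hr.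
  destruct HL as (Hmu & Hr1 & He & Ha & Hb & Hw & Hwd & Hode & Hw0 & Hwd0 & HF).
  set (A := a*(2 + tfun mu r/2)).
  set (k := 8*b*K2 e/(1-e)).
  assert (HK2 : 0 < K2 e) by (unfold K2; assert (0 < 1/(1-e)) by (apply Rdiv_lt_0_compat; lra); lra).
  assert (Hk : 0 <= k) by (unfold k; apply Rdiv_le_0_compat; [|lra]; assert (0 <= b * K2 e) by (apply Rmult_le_pos; lra); lra).
  assert (HA : 0 <= A) by (unfold A; assert (H:= t_nonneg mu r Hmu); apply Rmult_le_pos; lra).
  set (W := fun y => y*(phi1 mu y * wd y - w y * dphi1 mu y)).
  set (Hf := fun y => A*y^2/2 - k*exp(((e-1)/2)*tfun mu y)).
  change (Rabs (W r - W (mu/2)) <= A*r^2/2 + k).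
  apply Rle_trans with (Hf r - Hf (mu/2)).
  apply cmp with (df := fun s => s * phi1 mu s * F s)
                 (dH := fun s => A * s + 4*b*K2 e*dt mu s * exp(((e-1)/2)*tfun mu s)).
  - lra.
  - intros s Hs. unfold W. apply wr_deriv with (ddP := ddphi1 mu) (rh := rho mu) (wdd := Derive wd s).
    apply d_phi1; lra. apply d_dphi1; lra. apply Hw; lra. apply Derive_correct, Hwd; lra.
    apply Hode; lra. apply ode1; lra. lra.
  - intros s Hs. unfold Hf. eapply d_val.
    apply d_minus. apply d_asq.
    apply is_derive_scal with (k := k). apply d_expt; auto.
    simpl. unfold k. field. lra.
  - intros s Hs. unfold W. eapply wr_cont. apply d_phi1; lra. apply d_dphi1; lra.
    apply Hw; lra. apply Derive_correct, Hwd; lra.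
  - intros s Hs. unfold Hf. eapply is_derive_cont. eapply d_minus.
    apply d_asq. apply is_derive_scal with (k := k). apply d_expt; auto.
  - intros s Hs. specialize (HF s ltac:(lra)).
    assert (Hq := qf_pos mu s Hmu). assert (Hex := exp_pos (e * tfun mu s)).
    rewrite !Rabs_mult. rewrite (Rabs_right s) by lra.
    assert (Hp := phi1_abs mu s Hmu ltac:(lra)).
    assert (Htm := t_mono mu s r Hmu ltac:(lra)).
    assert (Hts := t_nonneg mu s Hmu).
    assert (HFp : 0 <= Rabs (F s)) by apply Rabs_pos.
    assert (Hpp : 0 <= Rabs (phi1 mu s)) by apply Rabs_pos.
    assert (Hrho : 0 <= rho mu s) by (unfold rho; apply Rdiv_le_0_compat; [|nra]; assert (0 <= qf mu s ^2) by (apply pow2_ge_0); lra).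
    assert (H1 : s * Rabs (phi1 mu s) * Rabs (F s) <= s * (2 + tfun mu s/2) * (a + b * rho mu s * exp (e * tfun mu s))).
    { apply Rmult_le_compat; try nra. }
    assert (Hlin := lin_ex_bound ((1-e)/2) (tfun mu s) ltac:(lra) Hts).
    replace (2 + 1/(2*((1-e)/2))) with (K2 e) in Hlin by (unfold K2; field; lra).
    assert (H2 : s * (2 + tfun mu s/2) * a <= A * s).
    { unfold A. assert (0 <= s * a) by nra. nra. }
    assert (H3 : s * (2 + tfun mu s/2) * (b * rho mu s * exp (e * tfun mu s)) <=
                 s * (K2 e * exp ((1-e)/2 * tfun mu s)) * (b * rho mu s * exp (e * tfun mu s))).
    { apply Rmult_le_compat_r. assert (0 <= b * rho mu s) by nra. nra. nra. }
    assert (E : s * (K2 e * exp ((1-e)/2 * tfun mu s)) * (b * rho mu s * exp (e * tfun mu s))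
              = 4 * b * K2 e * dt mu s * exp ((e - 1) / 2 * tfun mu s)).
    { replace ((e-1)/2) with ((1+e)/2 - 1) by field. rewrite exp_t_mul by auto.
      replace (exp ((1 + e) / 2 * tfun mu s)) with (exp ((1-e)/2 * tfun mu s) * exp (e * tfun mu s))
        by (rewrite <- exp_plus; f_equal; field).
      unfold rho, dt. field. lra. }
    lra.
  - unfold Hf. assert (Hc : exp ((e - 1) / 2 * tfun mu (mu/2)) <= 1).
    { rewrite <- exp_0 at 2. apply exp_le_mono. assert (H:= t_nonneg mu (mu/2) Hmu).
      assert (0 <= (1-e)/2 * tfun mu (mu/2)) by (apply Rmult_le_pos; lra). replace ((e-1)/2 * tfun mu (mu/2)) with (-((1-e)/2 * tfun mu (mu/2))) by field. lra. }
    assert (Hr' := exp_pos ((e - 1) / 2 * tfun mu r)).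
    assert (0 <= A * (mu/2)^2/2) by (assert (0 <= (mu/2)^2) by apply pow2_ge_0; unfold Rdiv; apply Rmult_le_pos; [apply Rmult_le_pos|]; lra).
    nra.
Qed.

Lemma id_w mu r w wd : 0 < mu -> 0 < r ->
  w = phi1 mu r * (r*(phi0 mu r * wd - w * dphi0 mu r)) - phi0 mu r * (r*(phi1 mu r * wd - w * dphi1 mu r)).
Proof. intros H Hr. assert (Hw := wronsk mu r H Hr).
  transitivity (w * (r * (phi0 mu r * dphi1 mu r - phi1 mu r * dphi0 mu r))). rewrite Hw; ring. ring. Qed.

Lemma id_wd mu r w wd : 0 < mu -> 0 < r ->
  r * wd = (r * dphi1 mu r) * (r*(phi0 mu r * wd - w * dphi0 mu r)) - (r * dphi0 mu r) * (r*(phi1 mu r * wd - w * dphi1 mu r)).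
Proof. intros H Hr. assert (Hw := wronsk mu r H Hr).
  transitivity (r * wd * (r * (phi0 mu r * dphi1 mu r - phi1 mu r * dphi0 mu r))). rewrite Hw; ring. ring. Qed.

Lemma KL_pos e : 0 < e < 1 -> 20 <= KL e /\ 0 < K0 e /\ 0 < K5 e.
Proof. intros He. unfold KL, K0, K5, K2.
  assert (0 < 1/(1-e)) by (apply Rdiv_lt_0_compat; lra).
  assert (0 < 4/(1-e)) by (apply Rdiv_lt_0_compat; lra).
  assert (0 < 8 * (2 + 1/(1-e)) / (1-e)) by (apply Rdiv_lt_0_compat; lra).
  lra. Qed.

Lemma LIN mu r1 e a b w wd F : LinHyp mu r1 e a b w wd F ->
  forall r, 0 <= r <= r1 ->
    Rabs (w r) <= KL e * (a*(mu^2+r1^2) + b) * tfun mu r /\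
    Rabs (wd r) <= KL e * (a*(mu^2+r1^2) + b) * dt mu r.
Proof.
  intros HL r Hr.
  assert (HI := regI _ _ _ _ _ _ _ _ HL).
  assert (HW0 := W0b2 _ _ _ _ _ _ _ _ HL).
  assert (HW1 := W1b _ _ _ _ _ _ _ _ r HL).
  destruct HL as (Hmu & Hr1 & He & Ha & Hb & Hw & Hwd & Hode & Hw0 & Hwd0 & HF).
  set (L := a*(mu^2+r1^2) + b).
  set (al := a/2 + 4*b/mu^2).
  destruct (KL_pos e He) as (HKL & HK0 & HK5).
  assert (Hmu2 : 0 < mu^2) by nra.
  assert (Hal : al * mu^2 <= 4 * L).
  { unfold al, L. replace ((a/2 + 4*b/mu^2) * mu^2) with (a*mu^2/2 + 4*b) by (field; lra).
    assert (0 <= a * r1^2) by nra. nra. }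
  assert (Hal0 : 0 <= al). { unfold al. assert (0 <= 4*b/mu^2) by (apply Rdiv_le_0_compat; nra). lra. }
  assert (HL0 : 0 <= L) by (unfold L; nra).
  assert (Ht := t_nonneg mu r Hmu).
  assert (Hq := qf_pos mu r Hmu). assert (Hq1 := qf_le1 mu r Hmu).
  destruct (Rle_lt_dec (r^2) (mu^2/4)) as [Hsm|Hbig].
  -
    destruct (HI r Hr Hsm) as [Hwr Hwdr]. fold al in Hwr, Hwdr.
    split.
    + assert (Htg := t_ge mu r Hmu).
      assert (Hx : r^2/mu^2 <= 1/4) by (apply Rmult_le_reg_r with (mu^2); [lra|]; field_simplify; lra).
      assert (Hx0 : 0 <= r^2/mu^2) by (apply sq_div_nonneg; auto).
      assert (Ht45 : 4/5 * (r^2/mu^2) <= tfun mu r).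
      { apply Rle_trans with ((r^2/mu^2)/(1+r^2/mu^2)); auto.
        set (x := r^2/mu^2) in *. apply Rmult_le_reg_r with (1 + x). lra.
        replace (x / (1+x) * (1+x)) with x by (field; lra). nra. }
      apply Rle_trans with (25/18*al*r^2); auto.
      replace (25/18*al*r^2) with (25/18*(al*mu^2)*(r^2/mu^2)) by (field; lra).
      apply Rle_trans with (25/18*(4*L)*(5/4 * tfun mu r)).
      apply Rmult_le_compat; try nra. 
      assert (0 <= L * tfun mu r) by nra. nra.
    + destruct (Req_dec r 0) as [E0|N0].
      * subst r. rewrite Hwd0, Rabs_R0. unfold dt. replace (2*0*qf mu 0/mu^2) with 0 by (field; lra). lra.
      * specialize (Hwdr ltac:(lra)).
        assert (Hdt : 8/5 * (r/mu^2) <= dt mu r).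
        { unfold dt. assert (H45 := q_ge45 mu r Hmu Hsm).
          replace (2*r*qf mu r/mu^2) with (2*qf mu r * (r/mu^2)) by (field; lra).
          assert (0 <= r/mu^2) by (apply Rdiv_le_0_compat; lra). nra. }
        apply Rle_trans with (5/3*(43/18)*al*r); auto.
        replace (5/3*(43/18)*al*r) with (5/3*(43/18)*(al*mu^2)*(r/mu^2)) by (field; lra).
        assert (0 <= r/mu^2) by (apply Rdiv_le_0_compat; lra).
        apply Rle_trans with (5/3*(43/18)*(4*L)*(5/8*dt mu r)).
        apply Rmult_le_compat; try nra.
        assert (0 <= L * dt mu r) by (apply Rmult_le_pos; lra). nra.
  -
    set (c := mu/2).
    assert (Hc : c^2 <= mu^2/4) by (unfold c; right; field).
    assert (Hcr : c <= r) by (unfold c; nra).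
    assert (Hc0 : 0 < c) by (unfold c; lra).
    assert (Hcr' : mu/2 <= r) by (unfold c in Hcr; lra).
    destruct (HI c ltac:(lra) Hc) as [Hwc Hwdc]. specialize (Hwdc Hc0). fold al in Hwc, Hwdc.
    specialize (HW1 ltac:(unfold c in Hcr; lra)).
    specialize (HW0 r Hr).
    fold c in HW1.
    set (W0r := r * (phi0 mu r * wd r - w r * dphi0 mu r)) in *.
    set (W1r := r * (phi1 mu r * wd r - w r * dphi1 mu r)) in *.
    set (W1c := c * (phi1 mu c * wd c - w c * dphi1 mu c)) in *.
    assert (Halc : al * c^2 <= L) by (unfold c; replace (al * (mu/2)^2) with (al*mu^2/4) by field; lra).
    assert (HW1c : Rabs W1c <= 15 * L).
    { unfold W1c. 
      replace (c * (phi1 mu c * wd c - w c * dphi1 mu c)) with (phi1 mu c * (c * wd c) - w c * (c * dphi1 mu c)) by ring.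
      eapply Rle_trans. apply Rabs_triang. rewrite Rabs_Ropp, !Rabs_mult, (Rabs_right c) by lra.
      assert (Hp1 := phi1_abs mu c Hmu ltac:(unfold c; lra)).
      assert (Htc := t_le mu c Hmu).
      assert (Hcc : c^2/mu^2 = 1/4) by (unfold c; field; lra).
      assert (Hd1 := sdphi1_abs mu c Hmu ltac:(unfold c; lra)).
      assert (A1 : Rabs (phi1 mu c) * (c * Rabs (wd c)) <= (2 + 1/8) * (5/3*(43/18)*al*c^2)).
      { apply Rmult_le_compat; try apply Rabs_pos. apply Rmult_le_pos; [lra|apply Rabs_pos]. lra.
        replace (5/3*(43/18)*al*c^2) with (c * (5/3*(43/18)*al*c)) by ring. apply Rmult_le_compat_l; lra. }
      rewrite Rabs_mult, (Rabs_right c) in Hd1 by lra.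
      assert (A2 : Rabs (w c) * (c * Rabs (dphi1 mu c)) <= (25/18*al*c^2) * 4).
      { apply Rmult_le_compat; try apply Rabs_pos; auto. apply Rmult_le_pos; [lra|apply Rabs_pos]. }
      assert (0 <= al * c^2) by nra.
      nra. }
    assert (Hr2 : a * r^2 <= L) by (unfold L; assert (a*r^2 <= a*r1^2) by (apply Rmult_le_compat_l; nra); nra).
    assert (HW0L : Rabs W0r <= K0 e * L).
    { unfold K0. apply Rle_trans with (a*r^2/2 + 4*b/(1-e)); auto.
      assert (4*b/(1-e) <= 4*L/(1-e)) by (unfold Rdiv; apply Rmult_le_compat_r; [apply Rlt_le, Rinv_0_lt_compat; lra| unfold L; nra]).
      replace ((1/2 + 4/(1-e)) * L) with (L/2 + 4*L/(1-e)) by (field; lra). lra. }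
    assert (HW1L : Rabs W1r <= (K5 e + 1 + tfun mu r/4) * L).
    { assert (Hk : 8*b*K2 e/(1-e) <= 8*K2 e/(1-e) * L).
      { unfold K2. replace (8*b*(2+1/(1-e))/(1-e)) with (8*(2+1/(1-e))/(1-e) * b) by (field; lra).
        apply Rmult_le_compat_l. assert (0 < 1/(1-e)) by (apply Rdiv_lt_0_compat; lra).
        apply Rdiv_le_0_compat; lra. unfold L; nra. }
      assert (Ha2 : a * (2 + tfun mu r / 2) * r^2/2 <= (1 + tfun mu r/4) * L).
      { replace (a * (2 + tfun mu r / 2) * r^2/2) with ((1 + tfun mu r/4) * (a*r^2)) by field.
        apply Rmult_le_compat_l; lra. }
      replace (W1r) with ((W1r - W1c) + W1c) by ring.
      eapply Rle_trans. apply Rabs_triang. unfold K5. nra. }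
    assert (Ht5 : 1/5 <= tfun mu r).
    { apply Rle_trans with ((r^2/mu^2)/(1+r^2/mu^2)). 2: apply t_ge; auto.
      assert (Hx : 1/4 <= r^2/mu^2) by (apply Rmult_le_reg_r with (mu^2); [lra|]; field_simplify; lra).
      set (x := r^2/mu^2) in *. apply Rmult_le_reg_r with (1 + x). lra.
      replace (x / (1+x) * (1+x)) with x by (field; lra). lra. }
    split.
    + rewrite (id_w mu r (w r) (wd r) Hmu ltac:(lra)). fold W0r W1r.
      eapply Rle_trans. apply Rabs_triang. rewrite Rabs_Ropp, !Rabs_mult.
      assert (Hp1 := phi1_abs mu r Hmu Hcr'). assert (Hp0 := phi0_abs mu r Hmu).
      assert (A1 : Rabs (phi1 mu r) * Rabs W0r <= (2 + tfun mu r/2) * (K0 e * L)).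
      { apply Rmult_le_compat; try apply Rabs_pos; auto. }
      assert (A2 : Rabs (phi0 mu r) * Rabs W1r <= 1 * ((K5 e + 1 + tfun mu r/4) * L)).
      { apply Rmult_le_compat; try apply Rabs_pos; auto. }
      assert (A3 : (2 + tfun mu r/2) * (K0 e * L) + 1 * ((K5 e + 1 + tfun mu r/4) * L)
                   <= KL e * L * tfun mu r).
      { unfold KL. assert (0 <= K0 e * L) by nra. assert (0 <= K5 e * L) by nra.
        assert (0 <= L * tfun mu r) by nra.
        assert (K0 e * L * 2 <= K0 e * L * (10 * tfun mu r)) by (apply Rmult_le_compat_l; lra).
        assert ((K5 e + 1) * L * 1 <= (K5 e + 1) * L * (5 * tfun mu r)) by (apply Rmult_le_compat_l; nra).
        nra. }
      lra.
    + assert (Hrd : Rabs (r * wd r) <= (4 * K0 e + K5 e + 2) * L).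
      { rewrite (id_wd mu r (w r) (wd r) Hmu ltac:(lra)). fold W0r W1r.
        rewrite sdphi0 by auto.
        eapply Rle_trans. apply Rabs_triang. rewrite Rabs_Ropp, (Rabs_mult (r * dphi1 mu r)), (Rabs_mult (-4 * _)).
        assert (Hd1 := sdphi1_abs mu r Hmu Hcr').
        assert (Hqq : 0 <= qf mu r * (1 - qf mu r)) by (apply Rmult_le_pos; lra).
        assert (H41 := q1q mu r Hmu).
        rewrite (Rabs_mult (-4)), (Rabs_left (-4)) by lra. rewrite (Rabs_right (qf mu r * (1 - qf mu r))) by lra.
        assert (A1 : Rabs (r * dphi1 mu r) * Rabs W0r <= 4 * (K0 e * L)).
        { apply Rmult_le_compat; try apply Rabs_pos; auto. }
        assert (Hqt := qt_le mu r Hmu).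
        assert (A2 : - -4 * (qf mu r * (1 - qf mu r)) * Rabs W1r <= 4 * (qf mu r * (1 - qf mu r)) * ((K5 e + 1 + tfun mu r/4) * L)).
        { replace (- -4) with 4 by ring. apply Rmult_le_compat_l. lra. auto. }
        assert (A3 : 4 * (qf mu r * (1 - qf mu r)) * ((K5 e + 1 + tfun mu r/4) * L) <= (K5 e + 2) * L).
        { assert (0 <= (K5 e + 1) * L) by nra.
          assert (4 * (qf mu r * (1 - qf mu r)) * ((K5 e + 1) * L) <= 1 * ((K5 e + 1) * L)) by (apply Rmult_le_compat_r; lra).
          assert (qf mu r * (1 - qf mu r) * tfun mu r <= 1).
          { assert (0 <= qf mu r * tfun mu r) by (apply Rmult_le_pos; lra).
            assert (qf mu r * tfun mu r * (1 - qf mu r) <= qf mu r * tfun mu r * 1) by (apply Rmult_le_compat_l; lra).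
            nra. }
          assert (qf mu r * (1 - qf mu r) * tfun mu r * L <= 1 * L) by (apply Rmult_le_compat_r; lra).
          nra. }
        lra. }
      assert (Hsd := sdt mu r Hmu).
      assert (Hq45 := q_le45 mu r Hmu ltac:(lra)).
      rewrite Rabs_mult, (Rabs_right r) in Hrd by lra.
      apply Rmult_le_reg_l with r. lra.
      apply Rle_trans with ((4 * K0 e + K5 e + 2) * L); auto.
      replace (r * (KL e * L * dt mu r)) with (KL e * L * (r * dt mu r)) by ring.
      rewrite Hsd. unfold KL.
      assert (0 <= K0 e * L) by nra. assert (0 <= K5 e * L) by nra.
      nra.
Qed.

Lemma rpow_between y a : 0 < y -> 0 <= a <= 1 ->
  (1 <= y -> 1 <= Rpower y a <= y) /\ (y <= 1 -> y <= Rpower y a <= 1).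
Proof.
  intros Hy Ha. unfold Rpower. split; intros H.
  - assert (0 <= ln y) by (rewrite <- ln_1; apply ln_le; lra).
    split. rewrite <- exp_0. apply exp_le_mono. nra.
    rewrite <- (exp_ln y) at 2 by lra. apply exp_le_mono. nra.
  - assert (ln y <= 0) by (rewrite <- ln_1; apply ln_le; lra).
    split. rewrite <- (exp_ln y) at 1 by lra. apply exp_le_mono. nra.
    rewrite <- exp_0. apply exp_le_mono. nra.
Qed.

Lemma rpow_abs y a : 0 < y -> 0 <= a <= 1 -> Rabs (Rpower y a - 1) <= Rabs (y - 1).
Proof. intros Hy Ha. destruct (rpow_between y a Hy Ha) as [H1 H2].
  destruct (Rle_dec 1 y). specialize (H1 r). rewrite !Rabs_right by lra. lra.
  specialize (H2 ltac:(lra)). rewrite !Rabs_left1 by lra. lra. Qed.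

Lemma d_rpow y p : 0 < y -> is_derive (fun z => Rpower z p) y (p * Rpower y (p-1)).
Proof. intros H. apply is_derive_Reals. apply derivable_pt_lim_power; auto. Qed.

Definition hq p v := Rpower (1+v) p - 1 - p*v.

Lemma d_hq p v : -1 < v -> is_derive (hq p) v (p * (Rpower (1+v) (p-1) - 1)).
Proof. intros H. unfold hq. eapply d_val.
  apply d_minus. apply d_minus.
  apply (is_derive_comp (fun z => Rpower z p) (fun z => 1 + z)). apply d_rpow; lra.
  auto_derive; auto. apply is_derive_const. apply is_derive_scal, d_id.
  simpl. unfold scal, zero; simpl. unfold mult; simpl. ring. Qed.

Lemma hq_cont p v : -1 < v -> continuity_pt (hq p) v.
Proof. intros H. eapply is_derive_cont. apply d_hq; auto. Qed.

Lemma hq_0 p : hq p 0 = 0.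
Proof. unfold hq, Rpower. rewrite Rplus_0_r, ln_1, Rmult_0_r, exp_0. ring. Qed.

Lemma hq_bound p v : 1 <= p <= 2 -> -1 < v -> 0 <= hq p v <= 2 * v^2.
Proof.
  intros Hp Hv.
  destruct (MVT_gen (hq p) 0 v (fun u => p * (Rpower (1+u) (p-1) - 1))) as [c [Hc E]].
  { intros u Hu. apply d_hq. destruct (Rle_dec 0 v); [rewrite Rmin_left in Hu by lra | rewrite Rmin_right in Hu by lra]; lra. }
  { intros u Hu. apply hq_cont. destruct (Rle_dec 0 v); [rewrite Rmin_left in Hu by lra | rewrite Rmin_right in Hu by lra]; lra. }
  rewrite hq_0, Rminus_0_r, Rminus_0_r in E. rewrite E.
  assert (Hc1 : -1 < c /\ Rabs c <= Rabs v).
  { destruct (Rle_dec 0 v).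
    - rewrite Rmin_left, Rmax_right in Hc by lra. rewrite !Rabs_right by lra. lra.
    - rewrite Rmin_right, Rmax_left in Hc by lra. rewrite !Rabs_left1 by lra. lra. }
  destruct (rpow_between (1+c) (p-1) ltac:(lra) ltac:(lra)) as [H1 H2].
  assert (Ha := rpow_abs (1+c) (p-1) ltac:(lra) ltac:(lra)).
  replace (1 + c - 1) with c in Ha by ring.
  split.
  - destruct (Rle_dec 0 v).
    + rewrite Rmin_left, Rmax_right in Hc by lra. specialize (H1 ltac:(lra)).
      apply Rmult_le_pos; [apply Rmult_le_pos|]; lra.
    + rewrite Rmin_right, Rmax_left in Hc by lra. specialize (H2 ltac:(lra)).
      replace (p * (Rpower (1 + c) (p - 1) - 1) * v) with ((p * (1 - Rpower (1 + c) (p - 1))) * (-v)) by ring.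
      apply Rmult_le_pos; [apply Rmult_le_pos|]; lra.
  - apply Rle_trans with (Rabs (p * (Rpower (1 + c) (p - 1) - 1) * v)). apply Rle_abs.
    rewrite !Rabs_mult, (Rabs_right p) by lra.
    assert (Rabs v * Rabs v = v^2) by (rewrite <- Rabs_mult; rewrite Rabs_right; [ring| nra]).
    assert (0 <= Rabs (Rpower (1 + c) (p - 1) - 1)) by apply Rabs_pos.
    assert (0 <= Rabs v) by apply Rabs_pos.
    assert (p * Rabs (Rpower (1 + c) (p - 1) - 1) <= 2 * Rabs v) by nra.
    nra.
Qed.

Lemma hq_lip p u1 u2 : 1 <= p <= 2 -> -1 < u1 <= 1 -> -1 < u2 <= 1 ->
  Rabs (hq p u2 - hq p u1) <= 2 * Rabs (u2 - u1).
Proof.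
  intros Hp H1 H2.
  destruct (MVT_gen (hq p) u1 u2 (fun u => p * (Rpower (1+u) (p-1) - 1))) as [c [Hc E]].
  { intros u Hu. apply d_hq. assert (Rmin u1 u2 > -1) by (unfold Rmin; destruct Rle_dec; lra). lra. }
  { intros u Hu. apply hq_cont. assert (Rmin u1 u2 > -1) by (unfold Rmin; destruct Rle_dec; lra). lra. }
  rewrite E. rewrite !Rabs_mult, (Rabs_right p) by lra.
  assert (Hc1 : -1 < c <= 1) by (split; [assert (Rmin u1 u2 > -1) by (unfold Rmin; destruct Rle_dec; lra) | assert (Rmax u1 u2 <= 1) by (unfold Rmax; destruct Rle_dec; lra)]; lra).
  assert (Ha := rpow_abs (1+c) (p-1) ltac:(lra) ltac:(lra)).
  replace (1 + c - 1) with c in Ha by ring.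
  assert (Rabs c <= 1) by (apply Rabs_le; lra).
  assert (0 <= Rabs (Rpower (1 + c) (p - 1) - 1)) by apply Rabs_pos.
  assert (0 <= Rabs (u2 - u1)) by apply Rabs_pos.
  assert (p * Rabs (Rpower (1 + c) (p - 1) - 1) <= 2) by nra.
  nra.
Qed.

Lemma hq_neg p x : 1 <= p <= 2 -> 0 <= x < 1 -> hq p (-x) <= p * x^2 / 2.
Proof.
  intros Hp Hx.
  set (k := fun s => 1 - p*s + p*s^2/2 - Rpower (1-s) p).
  assert (Hk : k 0 <= k x).
  { apply mono_lem with (dh := fun s => -p + p*s + p * Rpower (1-s) (p-1)).
    - lra.
    - intros s Hs. unfold k. eapply d_val.
      apply d_minus. 2: apply (is_derive_comp (fun z => Rpower z p) (fun z => 1 - z)); [apply d_rpow; lra|].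
      auto_derive; auto. auto_derive; auto.
      simpl. unfold scal, mult; simpl. unfold mult; simpl. field.
    - intros s Hs. unfold k. eapply is_derive_cont. 
      apply d_minus. 2: apply (is_derive_comp (fun z => Rpower z p) (fun z => 1 - z)); [apply d_rpow; lra|].
      auto_derive; auto. auto_derive; auto.
    - intros s Hs. destruct (rpow_between (1-s) (p-1) ltac:(lra) ltac:(lra)) as [_ H2].
      specialize (H2 ltac:(lra)). nra. }
  unfold k in Hk. unfold hq.
  replace (1 - 0) with 1 in Hk by ring.
  assert (Rpower 1 p = 1) by (unfold Rpower; rewrite ln_1, Rmult_0_r, exp_0; auto).
  replace (1 + - x) with (1 - x) by ring. nra.
Qed.

Lemma exp_m1 z : Rabs (exp z - 1) <= Rabs z * exp (Rabs z).
Proof.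
  destruct (MVT_gen exp 0 z exp) as [c [Hc E]].
  { intros u _. apply is_derive_Reals, derivable_pt_lim_exp. }
  { intros u _. apply derivable_continuous_pt, derivable_pt_exp. }
  rewrite exp_0, Rminus_0_r in E. rewrite E, Rabs_mult, (Rabs_right (exp c)) by (apply Rle_ge, Rlt_le, exp_pos).
  assert (c <= Rabs z) by (unfold Rmin, Rmax in Hc; destruct Rle_dec; [rewrite Rabs_right|rewrite Rabs_left]; lra).
  assert (exp c <= exp (Rabs z)) by (apply exp_le_mono; auto).
  assert (Hp := exp_pos c). rewrite Rmult_comm. apply Rmult_le_compat_l; auto. apply Rabs_pos.
Qed.

Lemma exp_m1z z : Rabs (exp z - 1 - z) <= z^2 * exp (Rabs z).
Proof.
  destruct (MVT_gen (fun y => exp y - 1 - y) 0 z (fun y => exp y - 1)) as [c [Hc E]].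
  { intros u _. eapply d_val. apply d_minus. apply d_minus. apply is_derive_Reals, derivable_pt_lim_exp.
    apply is_derive_const. apply d_id. simpl. unfold minus, plus, opp, zero; simpl. ring. }
  { intros u _. eapply is_derive_cont. apply d_minus. apply d_minus. apply is_derive_Reals, derivable_pt_lim_exp.
    apply is_derive_const. apply d_id. }
  rewrite exp_0 in E. replace (1 - 1 - 0) with 0 in E by ring. rewrite !Rminus_0_r in E. rewrite E.
  assert (Habs : Rabs c <= Rabs z) by (unfold Rmin, Rmax in Hc; destruct Rle_dec; [rewrite !Rabs_right|rewrite !Rabs_left1]; lra).
  assert (H1 := exp_m1 c).
  assert (exp (Rabs c) <= exp (Rabs z)) by (apply exp_le_mono; auto).
  rewrite Rabs_mult.
  assert (0 <= Rabs c) by apply Rabs_pos. assert (0 <= Rabs z) by apply Rabs_pos.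
  assert (Hp := exp_pos (Rabs c)).
  assert (Rabs (exp c - 1) <= Rabs z * exp (Rabs z)).
  { eapply Rle_trans. apply H1. apply Rmult_le_compat; lra. }
  assert (z^2 = Rabs z * Rabs z) by (rewrite <- Rabs_mult; rewrite Rabs_right; [ring|nra]).
  rewrite H4. assert (0 <= Rabs (exp c - 1)) by apply Rabs_pos.
  replace (Rabs z * Rabs z * exp (Rabs z)) with (Rabs z * (Rabs z * exp (Rabs z))) by ring.
  rewrite (Rmult_comm (Rabs (exp c - 1))). apply Rmult_le_compat_l; auto.
Qed.

Definition m0 eta := (1-eta)/2.
Definition ep1 eta e' := (e'-eta)/2.
Definition K4 eta e' := (1 + 4/ep1 eta e')^4.
Definition KE eta e' := (21 + 3/m0 eta) * K4 eta e'.
Definition KZ A eta := 3/m0 eta + 2*A + 18.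
Definition NLG A eta e' := 1 + A + 4*A/(1-eta) + (3/m0 eta + 4*A)/ep1 eta e' + KZ A eta ^2.

Lemma poly_exp (t e : R) : 0 <= t -> 0 < e <= 1 -> 1 + t <= (1 + 1/e) * exp (e*t).
Proof. intros Ht He. assert (H := exp_ineq1_le (e*t)).
  assert (0 < 1/e) by (apply Rdiv_lt_0_compat; lra).
  apply Rle_trans with ((1 + 1/e) * (1 + e*t)). 2: apply Rmult_le_compat_l; lra.
  assert (1/e * (e*t) = t) by (field; lra).
  assert (1/e * 1 >= 1) by (apply Rle_ge; apply Rmult_le_reg_r with e; [lra|]; field_simplify; lra).
  nra. Qed.

Lemma poly4_exp (t e : R) : 0 <= t -> 0 < e <= 1 -> (1 + t)^4 <= (1 + 4/e)^4 * exp (e*t).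
Proof. intros Ht He.
  assert (H := poly_exp t (e/4) Ht ltac:(lra)).
  replace (1/(e/4)) with (4/e) in H by (field; lra).
  assert (E : exp (e/4*t) ^4 = exp (e*t)).
  { simpl. rewrite Rmult_1_r, <- !exp_plus. f_equal. field. }
  rewrite <- E, <- Rpow_mult_distr. apply pow_incr. lra.
Qed.

Lemma sq_le_abs x K : Rabs x <= K -> x^2 <= K^2.
Proof. intros H. rewrite <- pow2_abs. apply pow_incr. split; [apply Rabs_pos|auto]. Qed.

Lemma ln_abs_bound m y : 0 < m <= 1 -> m <= y -> Rabs (ln y) <= Rabs (y-1)/m.
Proof. intros Hm Hy.
  destruct (Rle_dec 1 y).
  - assert (0 <= ln y) by (rewrite <- ln_1; apply ln_le; lra).
    assert (H1 := ln_le_m1 y ltac:(lra)).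
    rewrite !Rabs_right by lra. apply Rle_trans with (y-1); auto.
    apply Rmult_le_reg_r with m. lra. field_simplify; nra.
  - assert (ln y <= 0) by (rewrite <- ln_1; apply ln_le; lra).
    assert (H1 := ln_le_m1 (/y) ltac:(apply Rinv_0_lt_compat; lra)).
    rewrite ln_Rinv in H1 by lra.
    rewrite Rabs_left1 by lra. rewrite Rabs_left1 by lra.
    apply Rle_trans with (/y - 1). lra.
    replace (/y - 1) with ((1-y)/y) by (field; lra).
    unfold Rdiv. replace (- (y-1)) with (1-y) by ring. apply Rmult_le_compat_l. lra.
    apply Rinv_le_contravar; lra.
Qed.

Lemma NL_id g p mu t v : 0 < g -> 1 <= p -> 0 < mu -> -1 < v ->
  nonlin (lam p mu g) p (g*(1+v)) * (mu^2*Rpower g (p-1)*p)/(8*exp(-2*t))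
  = exp ((p-1)*ln(1+v) + Rpower g p * hq p v + p*Rpower g p*v + 2*t).
Proof.
  intros Hg Hp Hmu Hv.
  assert (Hb1 : Rpower (g*(1+v)) (p-1) = Rpower g (p-1) * exp((p-1)*ln(1+v))).
  { unfold Rpower. rewrite ln_mult by lra. rewrite <- exp_plus. f_equal. ring. }
  assert (Hb2 : Rpower (g*(1+v)) p = Rpower g p * (hq p v + 1 + p*v)).
  { unfold hq. rewrite <- Rpower_mult_distr by lra. ring. }
  assert (Hg2 : Rpower g (2*(p-1)) = Rpower g (p-1) * Rpower g (p-1)).
  { rewrite <- Rpower_plus. f_equal. ring. }
  assert (HgP : 0 < Rpower g (p-1)) by (unfold Rpower; apply exp_pos).
  assert (He1 : exp (Rpower g p * (hq p v + 1 + p * v)) = exp (Rpower g p) * exp (Rpower g p * hq p v + p*Rpower g p*v + 2*t) * exp(-2*t)).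
  { rewrite <- !exp_plus. f_equal. ring. }
  unfold nonlin, lam. rewrite Hb1, Hb2, Hg2, He1.
  assert (0 < exp (Rpower g p)) by apply exp_pos.
  assert (0 < exp (-2*t)) by apply exp_pos.
  replace ((p-1)*ln(1+v) + Rpower g p * hq p v + p*Rpower g p*v + 2*t) with ((p-1)*ln(1+v) + (Rpower g p * hq p v + p*Rpower g p*v + 2*t)) by ring.
  rewrite (exp_plus ((p-1)*ln(1+v)) _).
  field. repeat split; try lra; try nra.
Qed.

Lemma NL g p mu t w A eta e' :
  0 < g -> 1 <= p <= 2 -> 0 < mu -> 0 < eta -> eta < e' -> e' < 1 -> 0 <= t -> 0 <= A ->
  NLG A eta e' <= Rpower g p ->
  t <= eta * p * Rpower g p / 2 ->
  Rabs w <= A * (t+1) / Rpower g p ->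
  0 < g * (1 + w / Rpower g p - 2*t/(p*Rpower g p)) /\
  g * (1 + w / Rpower g p - 2*t/(p*Rpower g p)) <= 2*g /\
  Rabs (nonlin (lam p mu g) p (g * (1 + w / Rpower g p - 2*t/(p*Rpower g p)))
          * (mu^2 * Rpower g (p-1) * p) / (8*exp(-2*t)) - 1 - p*w)
    <= KE eta e' * exp(e' * t) / Rpower g p.
Proof.
  intros Hg Hp Hmu Heta He' He1 Ht HA HNLG Htb Hw.
  set (P := Rpower g p) in *.
  assert (Hm0 : m0 eta = (1-eta)/2) by reflexivity.
  assert (Hep : ep1 eta e' = (e'-eta)/2) by reflexivity.
  assert (Hm0p : 0 < m0 eta) by (rewrite Hm0; lra).
  assert (Hepp : 0 < ep1 eta e') by (rewrite Hep; lra).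
  assert (T1 : 0 <= 4*A/(1-eta)) by (apply Rdiv_le_0_compat; lra).
  assert (T2 : 0 <= (3/m0 eta + 4*A)/ep1 eta e').
  { apply Rdiv_le_0_compat; [|lra]. assert (0 <= 3/m0 eta) by (apply Rdiv_le_0_compat; lra). lra. }
  assert (T3 : 0 <= KZ A eta ^2) by apply pow2_ge_0.
  unfold NLG in HNLG.
  assert (HP1 : 1 <= P) by lra.
  assert (HPA : A <= P) by lra.
  assert (HP2 : 4*A/(1-eta) <= P) by lra.
  assert (HP3 : (3/m0 eta + 4*A)/ep1 eta e' <= P) by lra.
  assert (HP4 : KZ A eta ^2 <= P) by lra.
  clear T1 T2 T3 HNLG.
  assert (HP0 : 0 < P) by lra.
  set (x := 2*t/(p*P)).
  set (d := w/P).
  set (v := d - x).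
  replace (1 + w / P - 2 * t / (p * P)) with (1 + v) by (unfold v, d, x; ring).
  assert (Hx0 : 0 <= x) by (unfold x; apply Rdiv_le_0_compat; nra).
  assert (Hxe : x <= eta).
  { unfold x. apply Rmult_le_reg_r with (p*P). nra. field_simplify; nra. }
  assert (Hxt : x <= 2*t/P).
  { unfold x. unfold Rdiv. apply Rmult_le_compat_l. lra.
    apply Rinv_le_contravar; nra. }
  assert (Hep2 : eta * p <= 2) by nra.
  assert (Hep3 : eta * p * P <= 2 * P) by (apply Rmult_le_compat_r; lra).
  assert (HtP : t + 1 <= 2*P) by lra.
  assert (Hd : Rabs d <= A*(t+1)/P^2).
  { unfold d. unfold Rdiv. rewrite Rabs_mult, Rabs_inv, (Rabs_right P) by lra.
    apply Rle_trans with (A * (t+1) / P * /P). apply Rmult_le_compat_r; [apply Rlt_le, Rinv_0_lt_compat; lra| auto].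
    right; field; lra. }
  assert (Hd1 : Rabs d <= 2*A/P).
  { apply Rle_trans with (A*(t+1)/P^2); auto.
    apply Rmult_le_reg_r with (P^2). nra. field_simplify; nra. }
  assert (Hd2 : 2*A/P <= (1-eta)/2).
  { apply Rmult_le_reg_r with P. lra. field_simplify.
    apply Rmult_le_compat_r with (r := 1 - eta) in HP2. 2: lra.
    unfold Rdiv in HP2. rewrite Rmult_assoc, Rinv_l in HP2 by lra. nra. lra. }
  assert (Hd3 : Rabs d <= (t+1)/P).
  { apply Rle_trans with (A*(t+1)/P^2); auto.
    apply Rmult_le_reg_r with (P^2). nra. field_simplify; nra. }
  apply Rabs_le_between in Hd1. 
  assert (Hv1 : (1-eta)/2 <= 1 + v) by (unfold v; lra).
  assert (Hvup : v <= 1) by (unfold v; lra).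
  assert (Hvabs : Rabs v <= 3*(t+1)/P).
  { unfold v. unfold Rminus. eapply Rle_trans. apply Rabs_triang. rewrite Rabs_Ropp, (Rabs_right x) by lra.
    assert (2*t/P <= 2*(t+1)/P) by (unfold Rdiv; apply Rmult_le_compat_r; [apply Rlt_le, Rinv_0_lt_compat|]; lra).
    replace (3*(t+1)/P) with (2*(t+1)/P + (t+1)/P) by (field; lra). lra. }
  split. { apply Rmult_lt_0_compat; lra. }
  split. { apply Rmult_le_compat_l with (r := g) in Hvup. 2: lra. unfold v in *. nra. }
  replace (1 + d - x) with (1 + v) by (unfold v; ring).
  rewrite NL_id by (auto; lra). fold P.
  set (Q := P * hq p v).
  assert (Hpv : p * P * v + 2*t = p*w).
  { unfold v, d, x. field. split; lra. }
  replace ((p - 1) * ln (1 + v) + Q + p * P * v + 2 * t) with ((p - 1) * ln (1 + v) + Q + p*w)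
    by (rewrite <- Hpv; ring).
  set (Z := (p - 1) * ln (1 + v) + Q + p*w).
  assert (Hln : Rabs (ln (1+v)) <= 3*(t+1)/P / m0 eta).
  { eapply Rle_trans. apply ln_abs_bound with (m := m0 eta). rewrite Hm0; lra. rewrite Hm0; lra.
    replace (1 + v - 1) with v by ring. unfold Rdiv. apply Rmult_le_compat_r. 
    apply Rlt_le, Rinv_0_lt_compat; lra. auto. }
  destruct (hq_bound p v Hp ltac:(lra)) as [Hq0 Hq1].
  assert (HQ0 : 0 <= Q) by (unfold Q; nra).
  assert (HQ1 : Q <= 18*(t+1)^2/P).
  { unfold Q. apply Rle_trans with (P * (2*v^2)). apply Rmult_le_compat_l; lra.
    assert (v^2 <= (3*(t+1)/P)^2).
    { apply sq_le_abs; auto. }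
    apply Rle_trans with (P * (2 * (3 * (t + 1) / P)^2)). apply Rmult_le_compat_l; lra.
    right. field. lra. }
  assert (HQ2 : Q <= eta * t + 2 * Rabs w).
  { assert (H1 := hq_neg p x Hp ltac:(lra)).
    assert (H2 := hq_lip p (-x) v Hp ltac:(lra) ltac:(lra)).
    replace (v - - x) with d in H2 by (unfold v; ring).
    apply Rabs_le_between in H2.
    assert (E1 : P * (p * x^2/2) = x * t) by (unfold x; field; lra).
    assert (E2 : P * Rabs d = Rabs w) by (unfold d; unfold Rdiv; rewrite Rabs_mult, Rabs_inv, (Rabs_right P) by lra; field; lra).
    unfold Q. apply Rle_trans with (P * (p*x^2/2) + P * (2 * Rabs d)).
    rewrite <- Rmult_plus_distr_l. apply Rmult_le_compat_l; lra.
    rewrite E1. assert (x * t <= eta * t) by (apply Rmult_le_compat_r; lra). lra. }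
  assert (Hw2 : Rabs (p*w) <= 2*A*(t+1)/P).
  { rewrite Rabs_mult, Rabs_right by lra.
    apply Rle_trans with (2 * (A*(t+1)/P)). apply Rmult_le_compat; try lra. apply Rabs_pos.
    right; field; lra. }
  assert (Hlnp : Rabs ((p-1) * ln (1+v)) <= 3*(t+1)/P / m0 eta).
  { rewrite Rabs_mult. apply Rle_trans with (1 * Rabs (ln (1+v))). 
    apply Rmult_le_compat_r. apply Rabs_pos. apply Rabs_le; lra. lra. }
  assert (HZ1 : Rabs Z <= eta*t + ep1 eta e' * (t+1)).
  { unfold Z. eapply Rle_trans. apply Rabs_triang. eapply Rle_trans. apply Rplus_le_compat_r. apply Rabs_triang.
    rewrite (Rabs_right Q) by lra.
    assert (HA' : Rabs w <= A*(t+1)/P) by auto.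
    assert (K : (3/m0 eta + 4*A) * (t+1)/P <= ep1 eta e' * (t+1)).
    { apply Rmult_le_compat_r with (r := ep1 eta e') in HP3. 2: lra.
      unfold Rdiv in HP3 at 1. rewrite Rmult_assoc, Rinv_l, Rmult_1_r in HP3 by lra.
      apply Rmult_le_reg_r with P. lra. unfold Rdiv. rewrite Rmult_assoc, Rinv_l, Rmult_1_r by lra.
      nra. }
    assert (3*(t+1)/P / m0 eta + 2*A*(t+1)/P + 2*(A*(t+1)/P) = (3/m0 eta + 4*A) * (t+1)/P) by (field; lra).
    lra. }
  assert (HZ2 : Rabs Z <= KZ A eta * (t+1)^2 / P).
  { unfold Z. eapply Rle_trans. apply Rabs_triang. eapply Rle_trans. apply Rplus_le_compat_r. apply Rabs_triang.
    rewrite (Rabs_right Q) by lra. unfold KZ.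
    assert (t+1 <= (t+1)^2) by nra.
    assert (E : (3 / m0 eta + 2 * A + 18) * (t + 1) ^ 2 / P = 3*(t+1)^2/P/m0 eta + 2*A*(t+1)^2/P + 18*(t+1)^2/P) by (field; lra).
    rewrite E.
    assert (3*(t+1)/P / m0 eta <= 3*(t+1)^2/P/m0 eta).
    { unfold Rdiv. apply Rmult_le_compat_r. apply Rlt_le, Rinv_0_lt_compat; lra.
      apply Rmult_le_compat_r. apply Rlt_le, Rinv_0_lt_compat; lra. lra. }
    assert (2*A*(t+1)/P <= 2*A*(t+1)^2/P).
    { unfold Rdiv. apply Rmult_le_compat_r. apply Rlt_le, Rinv_0_lt_compat; lra. nra. }
    lra. }
  replace (exp Z - 1 - p * w) with ((exp Z - 1 - Z) + ((p-1) * ln (1+v) + Q)) by (unfold Z; ring).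
  eapply Rle_trans. apply Rabs_triang. eapply Rle_trans. apply Rplus_le_compat_r. apply exp_m1z.
  eapply Rle_trans. apply Rplus_le_compat_l. apply Rabs_triang.
  rewrite (Rabs_right Q) by lra.
  assert (HexpZ : exp (Rabs Z) <= 3 * exp ((e' - ep1 eta e') * t)).
  { assert (exp (Rabs Z) <= exp (1 + (e' - ep1 eta e') * t)).
    { apply exp_le_mono. rewrite Hep in *. assert (ep1 eta e' <= 1) by (rewrite Hep; lra).
      assert ((e'-eta)/2 * (t+1) <= (e'-eta)/2 * t + 1) by nra. 
      replace (e' - (e'-eta)/2) with (eta + (e'-eta)/2) by field. nra. }
    rewrite exp_plus in H. assert (H3 := exp_le_3). 
    assert (0 < exp ((e' - ep1 eta e') * t)) by apply exp_pos. nra. }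
  assert (HZ2sq : Z^2 <= (t+1)^4 / P).
  { assert (0 <= KZ A eta * (t + 1) ^ 2 / P).
    { unfold KZ. apply Rdiv_le_0_compat; [|lra]. apply Rmult_le_pos. assert (0 <= 3/m0 eta) by (apply Rdiv_le_0_compat; lra). lra. apply pow2_ge_0. }
    apply Rle_trans with ((KZ A eta * (t + 1) ^ 2 / P)^2). apply sq_le_abs; auto.
    replace ((KZ A eta * (t + 1) ^ 2 / P)^2) with (KZ A eta ^2 * (t+1)^4 / P / P) by (field; lra).
    replace (KZ A eta ^2 * (t+1)^4 / P / P) with ((KZ A eta ^2 / P) * ((t+1)^4 / P)) by (field; lra).
    assert (0 <= (t+1)^4 / P) by (apply Rdiv_le_0_compat; [apply pow_le|]; lra).
    assert (KZ A eta ^2 / P <= 1).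
    { apply Rmult_le_reg_r with P. lra. unfold Rdiv. rewrite Rmult_assoc, Rinv_l by lra. lra. }
    nra. }
  assert (Hpoly := poly4_exp t (ep1 eta e') Ht ltac:(rewrite Hep; lra)).
  fold (K4 eta e') in Hpoly. replace (1+t) with (t+1) in Hpoly by ring.
  assert (HK4 : 1 <= K4 eta e').
  { unfold K4. assert (0 < 4/ep1 eta e') by (apply Rdiv_lt_0_compat; lra).
    assert (1 <= 1 + 4/ep1 eta e') by lra. 
    replace 1 with (1^4) by ring. apply pow_incr. lra. }
  assert (Ht4 : 1 <= (t+1)^4) by (replace 1 with (1^4) by ring; apply pow_incr; lra).
  assert (Ht14 : t+1 <= (t+1)^4) by (replace ((t+1)^4) with ((t+1)*(t+1)^3) by ring; assert (1 <= (t+1)^3) by (replace 1 with (1^3) by ring; apply pow_incr; lra); nra).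
  assert (Ht24 : (t+1)^2 <= (t+1)^4) by (replace ((t+1)^4) with ((t+1)^2*(t+1)^2) by ring; nra).
  assert (Eexp : exp ((e' - ep1 eta e') * t) * exp (ep1 eta e' * t) = exp (e' * t)) by (rewrite <- exp_plus; f_equal; ring).
  assert (He0 : 1 <= exp ((e' - ep1 eta e') * t)).
  { rewrite <- exp_0 at 1. apply exp_le_mono. rewrite Hep. nra. }
  assert (Hpos1 := exp_pos ((e' - ep1 eta e') * t)).
  assert (Hpos2 := exp_pos (ep1 eta e' * t)).
  set (X := exp ((e' - ep1 eta e') * t)) in *.
  set (Y := exp (ep1 eta e' * t)) in *.
  set (T4 := (t+1)^4) in *.
  assert (B1 : Z ^ 2 * exp (Rabs Z) <= 3 * T4 * X / P).
  { apply Rle_trans with (T4 / P * (3 * X)). apply Rmult_le_compat; auto. apply pow2_ge_0. apply Rlt_le, exp_pos.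
    right; field; lra. }
  assert (B2 : Rabs ((p-1) * ln (1+v)) <= 3 * T4 * X / P / m0 eta).
  { eapply Rle_trans. apply Hlnp. unfold Rdiv. apply Rmult_le_compat_r. apply Rlt_le, Rinv_0_lt_compat; lra.
    apply Rmult_le_compat_r. apply Rlt_le, Rinv_0_lt_compat; lra. nra. }
  assert (B3 : Q <= 18 * T4 * X / P).
  { eapply Rle_trans. apply HQ1. unfold Rdiv. apply Rmult_le_compat_r. apply Rlt_le, Rinv_0_lt_compat; lra. nra. }
  assert (B4 : 3 * T4 * X / P + 3 * T4 * X / P / m0 eta + 18 * T4 * X / P = (21 + 3/m0 eta) * T4 * X / P) by (field; lra).
  assert (B5 : (21 + 3/m0 eta) * T4 * X / P <= KE eta e' * exp (e' * t) / P).
  { unfold KE. rewrite <- Eexp. unfold Rdiv. apply Rmult_le_compat_r. apply Rlt_le, Rinv_0_lt_compat; lra.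
    assert (0 <= 21 + 3/m0 eta) by (assert (0 <= 3/m0 eta) by (apply Rdiv_le_0_compat; lra); lra).
    replace ((21 + 3 * / m0 eta) * K4 eta e' * (X * Y)) with ((21 + 3 * / m0 eta) * X * (K4 eta e' * Y)) by ring.
    replace ((21 + 3 * / m0 eta) * T4 * X) with ((21 + 3 * / m0 eta) * X * T4) by ring.
    apply Rmult_le_compat_l. apply Rmult_le_pos; lra. auto. }
  lra.
Qed.

Lemma cont_nb f x0 eps : continuity_pt f x0 -> 0 < eps ->
  exists d, 0 < d /\ forall x, Rabs (x - x0) < d -> Rabs (f x - f x0) < eps.
Proof.
  intros Hc He. destruct (Hc eps He) as [d [Hd H]].
  exists d. split; auto. intros x Hx.
  destruct (Req_dec x x0) as [->|N]. rewrite Rminus_diag, Rabs_R0; auto.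
  apply H. split. split; [constructor|auto]. auto.
Qed.

Lemma cont_ind (phi : R -> R) (R0 : R) : 0 <= R0 ->
  (forall s, 0 <= s <= R0 -> continuity_pt phi s) ->
  phi 0 <= 0 ->
  (forall r, 0 <= r <= R0 -> (forall s, 0 <= s <= r -> phi s <= 0) -> forall s, 0 <= s <= r -> phi s < 0) ->
  forall s, 0 <= s <= R0 -> phi s <= 0.
Proof.
  intros HR Hc H0 Himp.
  set (E := fun r => 0 <= r <= R0 /\ forall s, 0 <= s <= r -> phi s <= 0).
  assert (HE0 : E 0). { split. lra. intros s Hs. replace s with 0 by lra. auto. }
  assert (Hb : bound E). { exists R0. intros r [Hr _]. lra. }
  destruct (completeness E Hb (ex_intro _ 0 HE0)) as [m [Hub Hlub]].
  assert (Hm0 : 0 <= m) by (apply Hub; auto).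
  assert (HmR : m <= R0). { apply Hlub. intros r [Hr _]. lra. }
  assert (C1 : forall s, 0 <= s < m -> phi s <= 0).
  { intros s Hs. destruct (classic (exists r, E r /\ s < r)) as [[r [[Hr1 Hr2] Hsr]]|N].
    - apply Hr2. lra.
    - exfalso. assert (m <= s). { apply Hlub. intros r Er. destruct (Rle_dec r s); auto. exfalso. apply N. exists r. split; auto. lra. }
      lra. }
  assert (C2 : phi m <= 0).
  { destruct (Req_dec m 0) as [->|Nm]; auto.
    destruct (Rle_dec (phi m) 0) as [Hle|Hgt]; auto. exfalso.
    destruct (cont_nb phi m (phi m) (Hc m ltac:(lra)) ltac:(lra)) as [d [Hd Hn]].
    set (x := Rmax 0 (m - d/2)).
    assert (Hx1 : 0 <= x) by (unfold x; apply Rmax_l).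
    assert (Hx2 : x < m) by (unfold x; unfold Rmax; destruct Rle_dec; lra).
    assert (Hx3 : Rabs (x - m) < d) by (unfold x; unfold Rmax; destruct Rle_dec; rewrite Rabs_left; lra).
    specialize (Hn x Hx3). specialize (C1 x ltac:(lra)). apply Rabs_def2 in Hn. lra. }
  assert (Em : E m). { split. lra. intros s Hs. destruct (Req_dec s m) as [->|N]; auto. apply C1; lra. }
  assert (Hneg := Himp m ltac:(lra) (proj2 Em)).
  assert (HmR' : m = R0).
  { destruct (Req_dec m R0); auto. exfalso.
    specialize (Hneg m ltac:(lra)).
    destruct (cont_nb phi m (- phi m) (Hc m ltac:(lra)) ltac:(lra)) as [d [Hd Hn]].
    set (m' := Rmin R0 (m + d/2)).
    assert (Hm1 : m < m') by (unfold m'; unfold Rmin; destruct Rle_dec; lra).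
    assert (Em' : E m').
    { split. unfold m'; unfold Rmin; destruct Rle_dec; lra.
      intros s Hs. destruct (Rle_dec s m).
      - apply Rlt_le, (Himp m ltac:(lra) (proj2 Em)). lra.
      - assert (Rabs (s - m) < d) by (rewrite Rabs_right; unfold m' in Hs; unfold Rmin in Hs; destruct Rle_dec in Hs; lra).
        specialize (Hn s H1). apply Rabs_def2 in Hn. lra. }
    assert (m' <= m) by (apply Hub; auto). lra. }
  subst m. intros s Hs. apply (proj2 Em). auto.
Qed.

Lemma even_deriv0 (f : R -> R) R0 l : 0 < R0 ->
  (forall r, -R0 <= r <= R0 -> f (-r) = f r) -> is_derive f 0 l -> l = 0.
Proof.
  intros HR Hev Hd.
  assert (H1 : is_derive (fun x => f (-x)) 0 (-l)).
  { eapply d_val. apply (is_derive_comp f (fun x => -x)). rewrite Ropp_0; exact Hd.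
    apply is_derive_Reals, derivable_pt_lim_opp, derivable_pt_lim_id. simpl. unfold scal; simpl. unfold mult; simpl. ring. }
  assert (H2 : is_derive f 0 (-l)).
  { apply is_derive_ext_loc with (fun x => f (-x)); auto.
    exists (mkposreal R0 HR). intros y Hy. simpl in Hy. unfold ball in Hy; simpl in Hy. unfold AbsRing_ball, abs, minus, plus, opp in Hy; simpl in Hy.
    apply Hev. rewrite Ropp_0, Rplus_0_r in Hy. apply Rabs_def2 in Hy. lra. }
  apply is_derive_unique in Hd. apply is_derive_unique in H2. lra.
Qed.

Definition ddt mu s := 2*qf mu s/mu^2 - 4*s^2*qf mu s^2/mu^4.

Lemma d_dt mu s : 0 < mu -> is_derive (dt mu) s (ddt mu s).
Proof. intros H. unfold dt, ddt, qf. auto_derive. nra. field. nra. Qed.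

Lemma dt_ode mu s : 0 < mu -> s <> 0 -> ddt mu s + dt mu s / s = rho mu s / 2.
Proof. intros H Hs. unfold ddt, dt, rho, qf. field. repeat split; auto; nra. Qed.

Lemma t0 mu : 0 < mu -> tfun mu 0 = 0.
Proof. intros H. unfold tfun. replace (1 + 0^2/mu^2) with 1 by (field; lra). apply ln_1. Qed.

Lemma dt0 mu : 0 < mu -> dt mu 0 = 0.
Proof. intros H. unfold dt. field. lra. Qed.

Lemma exp_m2t mu s : 0 < mu -> exp (-2 * tfun mu s) = qf mu s ^2.
Proof. intros H. rewrite <- exp_mt by auto. simpl. rewrite Rmult_1_r, <- exp_plus. f_equal. ring. Qed.

Lemma rpow_ge_base g p : 1 <= g -> 1 <= p -> g <= Rpower g p.
Proof. intros Hg Hp. unfold Rpower. rewrite <- (exp_ln g) at 1 by lra. apply exp_le_mono.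
  assert (0 <= ln g) by (rewrite <- ln_1; apply ln_le; lra). nra. Qed.

Lemma rpow_2p g p : Rpower g (2*p) = Rpower g p ^2.
Proof. replace (2*p) with (p+p) by ring. rewrite Rpower_plus. ring. Qed.

Lemma gp1_eq g p : 0 < g -> Rpower g p / g = Rpower g (p-1).
Proof. intros H. replace p with ((p-1) + 1) at 1 by ring. rewrite Rpower_plus, Rpower_1 by auto. field. lra. Qed.

Lemma rpow_pos g p : 0 < Rpower g p.
Proof. unfold Rpower. apply exp_pos. Qed.

Lemma d_wfun g p mu (b : R -> R) s db : 0 < g -> 0 < p -> 0 < mu -> is_derive b s db ->
  is_derive (wfun g p mu b) s (Rpower g p * (db / g) + 2 * dt mu s / p).
Proof.
  intros Hg Hp Hmu Hb. unfold wfun.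
  assert (HP := rpow_pos g p).
  unfold tfun. auto_derive.
  - split. exists db; auto. split; auto. assert (0 <= s^2/mu^2) by (apply Rdiv_le_0_compat; nra).
    change (s * (s * 1) * / (mu * (mu * 1))) with (s^2/mu^2). lra.
  - change (Derive (fun x : R => b x) s) with (Derive b s). rewrite (is_derive_unique _ _ _ Hb). unfold dt, qf. field. repeat split; try lra; nra.
Qed.

Lemma KE_pos eta e' : 0 < eta < e' -> e' < 1 -> 0 < KE eta e'.
Proof. intros H1 H2. unfold KE, K4, m0, ep1.
  assert (0 < 3/((1-eta)/2)) by (apply Rdiv_lt_0_compat; lra).
  assert (0 < 4/((e'-eta)/2)) by (apply Rdiv_lt_0_compat; lra).
  apply Rmult_lt_0_compat. lra. apply pow_lt. lra. Qed.

Lemma NLG_pos A eta e' : 0 <= A -> 0 < eta < e' -> e' < 1 -> 0 <= NLG A eta e'.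
Proof. intros HA H1 H2. unfold NLG, m0, ep1.
  assert (0 <= 4*A/(1-eta)) by (apply Rdiv_le_0_compat; lra).
  assert (0 < 3/((1-eta)/2)) by (apply Rdiv_lt_0_compat; lra).
  assert (0 <= (3/((1-eta)/2) + 4*A)/((e'-eta)/2)) by (apply Rdiv_le_0_compat; lra).
  assert (0 <= KZ A eta ^2) by apply pow2_ge_0. lra. Qed.

Lemma main_g (g pg mg Rb h0 eta eta' A C1 KEc Mp : R) (b : R -> R) :
  0 < g -> 1 <= pg <= 2 -> 0 < mg -> 0 < Rb -> mg < Rb -> 0 < eta -> eta < eta' -> eta' < 1 -> 0 < h0 ->
  KEc = KE eta eta' -> 0 <= Mp -> C1 = KL eta' * (4*h0*Mp + KEc) -> A = C1 + 1 ->
  NLG A eta eta' <= Rpower g pg -> C1 + 1 <= Rpower g pg ->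
  tfun mg Rb <= eta*pg*Rpower g pg/2 ->
  Rpower g pg ^2 * Rb^2 <= Mp ->
  (forall r, -Rb <= r <= Rb -> ex_derive b r /\ ex_derive (Derive b) r) ->
  (forall r, -Rb <= r <= Rb -> b (-r) = b r) ->
  b 0 = g ->
  (forall r, 0 < r < Rb -> -(Derive (Derive b) r + Derive b r / r) + h0 * b r = nonlin (lam pg mg g) pg (b r)) ->
  forall r, 0 <= r <= Rb ->
    b r <= g /\ Rabs (wfun g pg mg b r) <= C1/Rpower g pg * tfun mg r /\
    Rabs (Derive (wfun g pg mg b) r) <= C1/Rpower g pg * Derive (tfun mg) r /\
    exists E, nonlin (lam pg mg g) pg (b r) = 8*exp(-2*tfun mg r)/(mg^2*Rpower g (pg-1)*pg)*(1+E) /\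
      Rabs E <= (KEc + 2*C1/eta') * exp(eta' * tfun mg r)/Rpower g pg.
Proof.
  intros Hg Hp Hmu HR HmR Heta He1 He2 Hh0 HKEc HMp HC1 HA HNLG HC1P HtR HO Hreg Hev Hb0 Hode.
  set (P := Rpower g pg) in *.
  assert (HP0 : 0 < P) by apply rpow_pos.
  assert (HKE : 0 < KEc) by (rewrite HKEc; apply KE_pos; lra).
  destruct (KL_pos eta' ltac:(lra)) as (HKL & _ & _).
  assert (HC10 : 0 <= C1) by (rewrite HC1; apply Rmult_le_pos; [lra|]; nra).
  assert (HP1 : 1 <= P) by lra.
  set (gp1 := Rpower g (pg-1)).
  assert (Hgp1 : gp1 * g = P) by (unfold gp1; rewrite <- gp1_eq by auto; fold P; field; lra).
  assert (Hgp10 : 0 < gp1) by apply rpow_pos.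
  set (w := wfun g pg mg b).
  set (wd := fun r => P*(Derive b r/g) + 2*dt mg r/pg).
  set (Ef := fun r => nonlin (lam pg mg g) pg (b r) * (mg^2*gp1*pg)/(8*exp(-2*tfun mg r)) - 1).
  set (F := fun r => gp1*h0*b r - rho mg r*(Ef r - pg*w r)/pg).
  assert (Hw : forall s, 0 <= s <= Rb -> is_derive w s (wd s)).
  { intros s Hs. unfold w, wd. apply d_wfun; try lra. apply Derive_correct, Hreg; lra. }
  assert (Hwd' : forall s, 0 <= s <= Rb -> is_derive wd s (P*(Derive (Derive b) s/g) + 2*ddt mg s/pg)).
  { intros s Hs. unfold wd. eapply d_val.
    apply (is_derive_plus (fun r => P*(Derive b r/g)) (fun r => 2*dt mg r/pg)).
    apply is_derive_scal. 
    apply (is_derive_ext (fun r => /g * Derive b r)). intros; simpl; unfold Rdiv; ring.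
    apply is_derive_scal. apply Derive_correct, Hreg; lra.
    apply (is_derive_ext (fun r => 2/pg * dt mg r)). intros; simpl; unfold Rdiv; ring.
    apply is_derive_scal. apply d_dt; auto.
    simpl. unfold plus; simpl. field. lra. }
  assert (Hwd : forall s, 0 <= s <= Rb -> ex_derive wd s).
  { intros s Hs. eexists. apply Hwd'; auto. }
  assert (Hwexp : forall s, w s = P*(b s/g - 1 + 2*tfun mg s/(pg*P))) by (intros; reflexivity).
  assert (Hode' : forall s, 0 < s < Rb -> Derive wd s + wd s / s = F s - rho mg s * w s).
  { intros s Hs. rewrite (is_derive_unique _ _ _ (Hwd' s ltac:(lra))).
    specialize (Hode s Hs).
    assert (Hdd := dt_ode mg s Hmu ltac:(lra)).
    unfold wd, F, Ef. rewrite Hwexp.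
    rewrite exp_m2t by auto.
    set (N := nonlin (lam pg mg g) pg (b s)) in *.
    replace (Derive (Derive b) s) with (h0 * b s - N - Derive b s / s) by lra.
    replace (ddt mg s) with (rho mg s / 2 - dt mg s / s) by lra.
    assert (0 < qf mg s) by (apply qf_pos; auto).
    rewrite <- Hgp1. unfold rho. field. repeat split; try lra. }
  assert (Hw0 : w 0 = 0).
  { rewrite Hwexp, Hb0, t0 by auto. field. split; lra. }
  assert (Hwd0 : wd 0 = 0).
  { unfold wd. rewrite dt0 by auto.
    assert (HD : Derive b 0 = 0).
    { apply (even_deriv0 b Rb); auto. apply Derive_correct, Hreg; lra. }
    rewrite HD. field. split; lra. }
  assert (Htm : forall s, 0 <= s <= Rb -> tfun mg s <= eta*pg*P/2).
  { intros s Hs. apply Rle_trans with (tfun mg Rb); [apply t_mono; auto; lra | auto]. }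
  assert (HNL : forall s, 0 <= s <= Rb -> Rabs (w s) <= A*(tfun mg s + 1)/P ->
             0 < b s /\ b s <= 2*g /\ Rabs (Ef s - pg * w s) <= KEc * exp (eta' * tfun mg s) / P).
  { intros s Hs Hws.
    assert (HA0 : 0 <= A) by lra.
    destruct (NL g pg mg (tfun mg s) (w s) A eta eta' Hg Hp Hmu Heta He1 He2 (t_nonneg mg s Hmu) HA0 HNLG (Htm s Hs) Hws)
      as (N1 & N2 & N3).
    assert (Hbw : g * (1 + w s / P - 2 * tfun mg s / (pg * P)) = b s).
    { rewrite Hwexp. field. repeat split; lra. }
    fold P in N1, N2, N3. rewrite Hbw in N1, N2, N3. rewrite <- HKEc in N3.
    split; auto. }
  assert (HFb : forall s, 0 <= s <= Rb -> Rabs (w s) <= A*(tfun mg s + 1)/P ->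
             Rabs (F s) <= 2*h0*P + KEc/P * rho mg s * exp (eta' * tfun mg s)).
  { intros s Hs Hws. destruct (HNL s Hs Hws) as (N1 & N2 & N3).
    unfold F. unfold Rminus. eapply Rle_trans. apply Rabs_triang. rewrite Rabs_Ropp.
    assert (Hrho : 0 <= rho mg s) by (unfold rho; apply Rdiv_le_0_compat; [assert (0 <= qf mg s ^2) by apply pow2_ge_0; lra | nra]).
    assert (E1 : Rabs (gp1 * h0 * b s) <= 2*h0*P).
    { rewrite Rabs_right by (apply Rle_ge; apply Rmult_le_pos; [apply Rmult_le_pos|]; lra).
      rewrite <- Hgp1. assert (0 <= gp1 * h0) by (apply Rmult_le_pos; lra). nra. }
    assert (E2 : Rabs (rho mg s * (Ef s + - (pg * w s)) / pg) <= KEc / P * rho mg s * exp (eta' * tfun mg s)).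
    { unfold Rdiv. rewrite !Rabs_mult, Rabs_inv, (Rabs_right (rho mg s)) by lra. rewrite (Rabs_right pg) by lra.
      assert (/pg <= 1) by (rewrite <- Rinv_1; apply Rinv_le_contravar; lra).
      assert (0 < /pg) by (apply Rinv_0_lt_compat; lra).
      assert (H3 : Rabs (Ef s + - (pg * w s)) <= KEc * exp (eta' * tfun mg s) * / P) by exact N3.
      assert (0 <= Rabs (Ef s + - (pg * w s))) by apply Rabs_pos.
      apply Rle_trans with (rho mg s * Rabs (Ef s + - (pg * w s)) * 1).
      apply Rmult_le_compat_l. apply Rmult_le_pos; lra. lra.
      rewrite Rmult_1_r. replace (KEc * / P * rho mg s * exp (eta' * tfun mg s)) with (rho mg s * (KEc * exp (eta' * tfun mg s) * / P)) by ring.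
      apply Rmult_le_compat_l; lra. }
    lra. }
  assert (HLam : forall r, 0 <= r <= Rb -> 
            KL eta' * (2*h0*P*(mg^2 + r^2) + KEc/P) <= C1 / P).
  { intros r Hr.
    assert (H1 : P * Rb^2 <= Mp / P).
    { apply Rmult_le_reg_r with P. lra. replace (Mp / P * P) with Mp by (field; lra). replace (P * Rb^2 * P) with (P^2 * Rb^2) by ring. lra. }
    assert (H2 : mg^2 + r^2 <= 2 * Rb^2) by nra.
    assert (H3 : 2*h0*P*(mg^2 + r^2) <= 4*h0*Mp/P).
    { apply Rle_trans with (2*h0*P*(2*Rb^2)). apply Rmult_le_compat_l; [|auto]. nra.
      replace (2*h0*P*(2*Rb^2)) with (4*h0*(P*Rb^2)) by ring. 
      replace (4*h0*Mp/P) with (4*h0*(Mp/P)) by (field; lra). apply Rmult_le_compat_l; lra. }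
    rewrite HC1. replace (KL eta' * (4 * h0 * Mp + KEc) / P) with (KL eta' * (4 * h0 * Mp / P + KEc / P)) by (field; lra).
    apply Rmult_le_compat_l; lra. }
  set (phi := fun s => Rabs (w s) - A*(tfun mg s + 1/P)/P).
  assert (HAP : forall s, A*(tfun mg s + 1/P)/P <= A*(tfun mg s + 1)/P).
  { intros s. unfold Rdiv. apply Rmult_le_compat_r. apply Rlt_le, Rinv_0_lt_compat; lra.
    apply Rmult_le_compat_l. lra. assert (/P <= 1) by (rewrite <- Rinv_1; apply Rinv_le_contravar; lra). lra. }
  assert (HLIN : forall r, 0 <= r <= Rb -> (forall s, 0 <= s <= r -> Rabs (w s) <= A*(tfun mg s + 1)/P) ->
            forall s, 0 <= s <= r -> Rabs (w s) <= C1/P * tfun mg s /\ Rabs (wd s) <= C1/P * dt mg s).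
  { intros r Hr Hboot s Hs.
    assert (HL : LinHyp mg r eta' (2*h0*P) (KEc/P) w wd F).
    { unfold LinHyp. split; auto. split. lra. split. lra. split. nra. split.
      apply Rlt_le, Rdiv_lt_0_compat; lra.
      split. intros; apply Hw; lra. split. intros; apply Hwd; lra.
      split. intros; apply Hode'; lra. split; auto. split; auto.
      intros s' Hs'. apply HFb. lra. apply Hboot. lra. }
    destruct (LIN _ _ _ _ _ _ _ _ HL s Hs) as [L1 L2].
    assert (HLr := HLam r Hr).
    assert (Ht := t_nonneg mg s Hmu).
    assert (Hdt : 0 <= dt mg s).
    { unfold dt. assert (0 < qf mg s) by (apply qf_pos; auto). apply Rdiv_le_0_compat; [|nra].
      apply Rmult_le_pos; [|lra]. lra. }
    split.
    - eapply Rle_trans. apply L1. apply Rmult_le_compat_r; auto.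
    - eapply Rle_trans. apply L2. apply Rmult_le_compat_r; auto. }
  assert (Hcont_w : forall s, 0 <= s <= Rb -> continuity_pt w s).
  { intros s Hs. eapply is_derive_cont. apply Hw; auto. }
  assert (Hboot : forall s, 0 <= s <= Rb -> phi s <= 0).
  { apply cont_ind. lra.
    - intros s Hs. unfold phi. apply continuity_pt_minus.
      apply (continuity_pt_comp w Rabs). apply Hcont_w; auto. apply Rcontinuity_abs.
      apply continuity_pt_mult. apply continuity_pt_mult. apply continuity_pt_const. intros u v; auto.
      apply continuity_pt_plus. eapply is_derive_cont. apply d_t; auto. apply continuity_pt_const. intros u v; auto.
      apply continuity_pt_const. intros u v; auto.
    - unfold phi. rewrite Hw0, Rabs_R0, t0 by auto.
      assert (0 <= A*(0 + 1/P)/P). { apply Rdiv_le_0_compat; [|lra]. apply Rmult_le_pos. lra.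
        assert (0 < 1/P) by (apply Rdiv_lt_0_compat; lra). lra. } lra.
    - intros r Hr Hphi s Hs.
      assert (Hb2 : forall s, 0 <= s <= r -> Rabs (w s) <= A*(tfun mg s + 1)/P).
      { intros s' Hs'. specialize (Hphi s' Hs'). unfold phi in Hphi. specialize (HAP s'). lra. }
      destruct (HLIN r Hr Hb2 s Hs) as [L1 _].
      unfold phi. assert (Ht := t_nonneg mg s Hmu).
      assert (C1 / P * tfun mg s < A * (tfun mg s + 1/P) / P).
      { replace (C1 / P * tfun mg s) with (C1 * tfun mg s / P) by (field; lra).
        unfold Rdiv. apply Rmult_lt_compat_r. apply Rinv_0_lt_compat; lra.
        assert (0 < A * /P) by (apply Rmult_lt_0_compat; [lra|apply Rinv_0_lt_compat; lra]).
        rewrite HA. nra. }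
      lra. }
  assert (Hfin : forall s, 0 <= s <= Rb -> Rabs (w s) <= C1/P * tfun mg s /\ Rabs (wd s) <= C1/P * dt mg s).
  { apply (HLIN Rb). lra. intros s Hs. specialize (Hboot s Hs). unfold phi in Hboot. specialize (HAP s). lra. }
  intros r Hr.
  destruct (Hfin r Hr) as [F1 F2].
  assert (Ht := t_nonneg mg r Hmu).
  assert (Hwr : Rabs (w r) <= A*(tfun mg r + 1)/P).
  { eapply Rle_trans. apply F1. replace (C1/P * tfun mg r) with (C1 * tfun mg r / P) by (field; lra).
    unfold Rdiv. apply Rmult_le_compat_r. apply Rlt_le, Rinv_0_lt_compat; lra. rewrite HA. nra. }
  destruct (HNL r Hr Hwr) as (N1 & N2 & N3).
  split.
  {
    assert (Hbw : b r = g * (1 + w r / P - 2 * tfun mg r / (pg * P))) by (rewrite Hwexp; field; repeat split; lra).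
    rewrite Hbw.
    assert (w r <= tfun mg r).
    { apply Rabs_le_between in F1. apply Rle_trans with (C1/P * tfun mg r). lra.
      assert (C1 / P <= 1) by (apply Rmult_le_reg_r with P; [lra|]; unfold Rdiv; rewrite Rmult_assoc, Rinv_l by lra; lra).
      nra. }
    assert (w r / P <= 2 * tfun mg r / (pg * P)).
    { unfold Rdiv. rewrite Rinv_mult. 
      assert (0 < /P) by (apply Rinv_0_lt_compat; lra).
      assert (1/2 <= /pg) by (apply Rmult_le_reg_r with pg; [lra|]; rewrite Rinv_l by lra; lra).
      assert (w r * /P <= tfun mg r * / P) by (apply Rmult_le_compat_r; lra).
      assert (tfun mg r <= 2 * tfun mg r * / pg) by nra.
      assert (tfun mg r * /P <= 2 * tfun mg r * / pg * /P) by (apply Rmult_le_compat_r; lra).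
      lra. }
    nra. }
  split. { exact F1. }
  split.
  { rewrite (is_derive_unique _ _ _ (Hw r Hr)). rewrite (is_derive_unique _ _ _ (d_t mg r Hmu)). exact F2. }
  exists (Ef r). split.
  { unfold Ef. fold gp1. assert (0 < exp (-2 * tfun mg r)) by apply exp_pos. field. repeat split; try lra; nra. }
  { assert (HEt : tfun mg r <= exp (eta' * tfun mg r) / eta').
    { assert (H1 := exp_ineq1_le (eta' * tfun mg r)).
      apply Rmult_le_reg_r with eta'. lra. unfold Rdiv. rewrite Rmult_assoc, Rinv_l by lra. nra. }
    replace (Ef r) with ((Ef r - pg * w r) + pg * w r) by ring.
    eapply Rle_trans. apply Rabs_triang.
    rewrite (Rabs_mult pg), (Rabs_right pg) by lra.
    assert (pg * Rabs (w r) <= 2 * (C1/P * tfun mg r)) by (apply Rmult_le_compat; try lra; apply Rabs_pos).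
    assert (2 * (C1/P * tfun mg r) <= 2*C1/eta' * exp (eta' * tfun mg r) / P).
    { replace (2 * (C1/P * tfun mg r)) with (2*C1/P * tfun mg r) by (field; lra).
      apply Rle_trans with (2*C1/P * (exp (eta' * tfun mg r) / eta')).
      apply Rmult_le_compat_l. apply Rdiv_le_0_compat; lra. auto.
      right. field. split; lra. }
    assert (KEc * exp (eta' * tfun mg r) / P + 2*C1/eta' * exp (eta' * tfun mg r) / P
            = (KEc + 2*C1/eta') * exp (eta' * tfun mg r) / P) by (field; lra).
    lra. }
Qed.

Theorem proposition2p1
  (Gam : R -> Prop) (p mu rbar : R -> R) (B : R -> R -> R) (eta h0 : R)
  (HGpos : forall g, Gam g -> 0 < g)
  (HGunb : forall M, exists g, Gam g /\ M <= g)
  (Hp : forall g, Gam g -> 1 <= p g <= 2)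
  (Hmu : forall g, Gam g -> 0 < mu g)
  (Heta : 0 < eta < 1) (Hh0 : 0 < h0)
  (Hrbar : forall g, Gam g -> 0 < rbar g)
  (Hratio : forall eps, 0 < eps -> exists G, forall g, Gam g -> G <= g ->
              mu g / rbar g < eps)
  (Htr : exists G, forall g, Gam g -> G <= g ->
              tfun (mu g) (rbar g) <= eta * p g * Rpower g (p g) / 2)
  (HO1 : exists M G, forall g, Gam g -> G <= g ->
              Rpower g (2 * p g) * rbar g ^ 2 <= M)
  (* regularity of the radial profile r |-> B_gamma(r), extended evenly *)
  (Hreg : forall g, Gam g -> forall r, - rbar g <= r <= rbar g ->
              ex_derive (B g) r /\ ex_derive (Derive (B g)) r)
  (Heven : forall g, Gam g -> forall r, - rbar g <= r <= rbar g ->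
              B g (- r) = B g r)
  (Hpos : forall g, Gam g -> forall r, 0 <= r < rbar g -> 0 < B g r)
  (H0 : forall g, Gam g -> B g 0 = g)
  (* Delta B + h0 B = f(B), with Delta = -(d^2/dr^2 + (1/r) d/dr) for radial functions *)
  (Hode : forall g, Gam g -> forall r, 0 < r < rbar g ->
      - (Derive (Derive (B g)) r + Derive (B g) r / r) + h0 * B g r
        = nonlin (lam (p g) (mu g) g) (p g) (B g r))
  (* at the origin, Delta B(0) = -2 B''(0) *)
  (Hode0 : forall g, Gam g ->
      - (2 * Derive (Derive (B g)) 0) + h0 * B g 0
        = nonlin (lam (p g) (mu g) g) (p g) (B g 0)) :
  forall eta', eta < eta' < 1 ->
  exists C G, 0 < C /\
    forall g, Gam g -> G <= g -> forall r, 0 <= r <= rbar g ->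
      B g r <= g /\
      Rabs (wfun g (p g) (mu g) (B g) r) <= C / Rpower g (p g) * tfun (mu g) r /\
      Rabs (Derive (wfun g (p g) (mu g) (B g)) r)
        <= C / Rpower g (p g) * Derive (tfun (mu g)) r /\
      exists E,
        nonlin (lam (p g) (mu g) g) (p g) (B g r)
          = 8 * exp (- 2 * tfun (mu g) r)
              / (mu g ^ 2 * Rpower g (p g - 1) * p g) * (1 + E) /\
        Rabs E <= C * exp (eta' * tfun (mu g) r) / Rpower g (p g).
Proof.
  intros eta' [He1 He2].
  destruct Htr as [G1 HG1]. destruct HO1 as [M [G2 HG2]].
  destruct (Hratio 1 Rlt_0_1) as [G3 HG3].
  set (KEc := KE eta eta'). set (Mp := Rabs M).
  set (C1 := KL eta' * (4*h0*Mp + KEc)). set (A := C1 + 1).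
  assert (HKE : 0 < KEc) by (apply KE_pos; lra).
  destruct (KL_pos eta' ltac:(lra)) as (HKL & _ & _).
  assert (HMp : 0 <= Mp) by apply Rabs_pos.
  assert (HC10 : 0 <= C1) by (unfold C1; apply Rmult_le_pos; [lra|]; nra).
  assert (HNLG0 : 0 <= NLG A eta eta') by (apply NLG_pos; unfold A; lra).
  assert (Hee : 0 <= 2*C1/eta') by (apply Rdiv_le_0_compat; lra).
  exists (C1 + KEc + 2*C1/eta' + 1), (1 + Rabs G1 + Rabs G2 + Rabs G3 + NLG A eta eta' + C1).
  split. lra.
  intros g Hg HgG.
  assert (A1 := Rle_abs G1). assert (A2 := Rle_abs G2). assert (A3 := Rle_abs G3).
  assert (B1 := Rabs_pos G1). assert (B2 := Rabs_pos G2). assert (B3 := Rabs_pos G3).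
  assert (Hg1 : 1 <= g) by lra.
  assert (Hpg := Hp g Hg).
  assert (HPg : g <= Rpower g (p g)) by (apply rpow_ge_base; lra).
  assert (HmR : mu g < rbar g).
  { specialize (HG3 g Hg ltac:(lra)). assert (Hr := Hrbar g Hg).
    apply Rmult_lt_compat_r with (r := rbar g) in HG3; auto.
    unfold Rdiv in HG3. rewrite Rmult_assoc, Rinv_l, Rmult_1_r, Rmult_1_l in HG3 by lra. auto. }
  assert (HOg : Rpower g (p g) ^2 * rbar g ^2 <= Mp).
  { rewrite <- rpow_2p. eapply Rle_trans. apply HG2; auto. lra. apply Rle_abs. }
  intros r Hr.
  destruct (main_g g (p g) (mu g) (rbar g) h0 eta eta' A C1 KEc Mp (B g)
     ltac:(lra) Hpg (Hmu g Hg) (Hrbar g Hg) HmR ltac:(lra) ltac:(lra) ltac:(lra) Hh0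
     eq_refl HMp eq_refl eq_refl ltac:(lra) ltac:(lra) (HG1 g Hg ltac:(lra)) HOg
     (Hreg g Hg) (Heven g Hg) (H0 g Hg) (Hode g Hg) r Hr) as (M1 & M2 & M3 & M4).
  assert (HP0 : 0 < Rpower g (p g)) by apply rpow_pos.
  assert (Ht := t_nonneg (mu g) r (Hmu g Hg)).
  assert (HCC : C1 / Rpower g (p g) <= (C1 + KEc + 2*C1/eta' + 1) / Rpower g (p g)).
  { unfold Rdiv. apply Rmult_le_compat_r. apply Rlt_le, Rinv_0_lt_compat; lra. lra. }
  split; auto. split.
  { eapply Rle_trans. apply M2. apply Rmult_le_compat_r; auto. }
  split.
  { eapply Rle_trans. apply M3. apply Rmult_le_compat_r; auto.
    rewrite (is_derive_unique _ _ _ (d_t (mu g) r (Hmu g Hg))). unfold dt.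
    assert (0 < qf (mu g) r) by (apply qf_pos; auto). assert (0 < mu g) by auto.
    apply Rdiv_le_0_compat; [|nra]. apply Rmult_le_pos; [|lra]. lra. }
  destruct M4 as [E [E1 E2]]. exists E. split; auto.
  eapply Rle_trans. apply E2.
  assert (Hx := exp_pos (eta' * tfun (mu g) r)).
  unfold Rdiv. apply Rmult_le_compat_r. apply Rlt_le, Rinv_0_lt_compat; lra.
  apply Rmult_le_compat_r; lra.
Qed.
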